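(* Let $\varepsilon>0$, $\Omega\subset\mathbb{R}^2$ bounded open, $u\in\mathcal{SF}_\varepsilon(\Omega)$, $R\in\mathcal{R}_\varepsilon(u)$, and let $S_R(u)\subseteq\mathbb{S}^2$ be an admissible interpolation surface for $u$ in $R$. Then $S_R(u)$ is either a semi great-circle, or an arc of geodesic, or a geodesic triangle, or the union of two adjacent geodesic triangles, or a hemisphere.
   Context: $\mathcal{L}=\{ae_1+b\hat e_2:a,b\in\mathbb{Z}\}$ with $e_1=(1,0)$, $\hat e_2=\frac12(1,\sqrt3)$, $\mathcal{L}_\varepsilon=\varepsilon\mathcal{L}$, $\mathcal{L}_\varepsilon(R)=\mathcal{L}_\varepsilon\cap R$; $\mathcal{T}_\varepsilon$ is the set of closed triangles with vertices in $\mathcal{L}_\varepsilon$ pairwise at distance $\varepsilon$; $\mathcal{E}_\varepsilon$ the set of segments $[i,j]$, $i,j\in\mathcal{L}_\varepsilon$, $|i-j|=\varepsilon$. $n=(0,0,1)$; $\mathcal{SF}_\varepsilon(\Omega)$ is the set of $u:\mathcal{L}_\varepsilon\to\mathbb{S}^2$ with $u=n$ on $\mathcal{L}_\varepsilon\setminus\Omega$. $\mathcal{N}_\varepsilon(u)=\{[i,j]\in\mathcal{E}_\varepsilon:u(i)=-u(j)\}$. Two triangles of $\mathcal{T}_\varepsilon$ are neighbours if their intersection is an edge in $\mathcal{N}_\varepsilon(u)$, connected if joined by a finite chain of neighbours; $\mathcal{R}_\varepsilon(u)$ is the set of unions of pairwise connected triangles maximal under inclusion. $\mathrm{cone}_R(u)=\{\sum_{w\in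 u(\mathcal{L}_\varepsilon(R))}\lambda_ww:\lambda_w\ge0\}$. $S_R(u)$ is an admissible interpolation surface for $u$ in $R$ if: when $\mathrm{cone}_R(u)$ is not a linear subspace of $\mathbb{R}^3$, $S_R(u)=\{v/|v|: v=\sum_w\lambda_ww,\ \lambda_w\ge0,\ \sum_w\lambda_w>0\}$; when it is a linear subspace, $S_R(u)=\{v/|v|:v=\sum_w\lambda_ww+\tau h,\ \lambda_w,\tau\ge0,\ \sum_w\lambda_w+\tau>0\}$ for some $h\in\mathbb{S}^2$ orthogonal to $\mathrm{cone}_R(u)$ (sums over $w\in u(\mathcal{L}_\varepsilon(R))$). A geodesic triangle with linearly independent vertices $p_1,p_2,p_3\in\mathbb{S}^2$ is $\{\sum\lambda_ip_i/|\sum\lambda_ip_i|:\lambda_i>0\}$; a hemisphere is a set $\{q\in\mathbb{S}^2:q\cdot h>0\}$ (possibly with its boundary great circle). *)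

(* Defs.v *)
From Stdlib Require Import Reals Lra List Relations.
Open Scope R_scope.

Definition R2 : Type := (R * R)%type.
Definition R3 : Type := (R * R * R)%type.

Definition add2 (p q : R2) : R2 := (fst p + fst q, snd p + snd q).
Definition scal2 (a : R) (p : R2) : R2 := (a * fst p, a * snd p).
Definition dist2 (p q : R2) : R :=
  sqrt ((fst p - fst q) ^ 2 + (snd p - snd q) ^ 2).

Definition mk3 (a b c : R) : R3 := (a, b, c).
Definition c1 (v : R3) : R := fst (fst v).
Definition c2 (v : R3) : R := snd (fst v).
Definition c3 (v : R3) : R := snd v.
Definition add3 (v w : R3) : R3 := mk3 (c1 v + c1 w) (c2 v + c2 w) (c3 v + c3 w).
Definition scal3 (a : R) (v : R3) : R3 := mk3 (a * c1 v) (a * c2 v) (a * c3 v).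
Definition opp3 (v : R3) : R3 := scal3 (-1) v.
Definition zero3 : R3 := mk3 0 0 0.
Definition dot3 (v w : R3) : R := c1 v * c1 w + c2 v * c2 w + c3 v * c3 w.
Definition norm3 (v : R3) : R := sqrt (dot3 v v).
Definition normalize (v : R3) : R3 := scal3 (/ norm3 v) v.
Definition on_S2 (v : R3) : Prop := norm3 v = 1.
Definition npole : R3 := mk3 0 0 1.

Definition e1 : R2 := (1, 0).
Definition e2hat : R2 := (1 / 2, sqrt 3 / 2).
Definition in_lattice (eps : R) (x : R2) : Prop :=
  exists a b : Z, x = scal2 eps (add2 (scal2 (IZR a) e1) (scal2 (IZR b) e2hat)).

Definition open2 (O : R2 -> Prop) : Prop :=
  forall x, O x -> exists r, 0 < r /\ forall y, dist2 x y < r -> O y.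
Definition bounded2 (O : R2 -> Prop) : Prop :=
  exists M, forall x, O x -> dist2 x (0, 0) <= M.

(* u in SF_eps(Omega): u : L_eps -> S^2 with u = n on L_eps \ Omega.
   (u is given as a map on R^2; only its values on L_eps matter.) *)
Definition SF (eps : R) (Omega : R2 -> Prop) (u : R2 -> R3) : Prop :=
  (forall i, in_lattice eps i -> on_S2 (u i)) /\
  (forall i, in_lattice eps i -> ~ Omega i -> u i = npole).

Definition conv3 (a b c : R2) (x : R2) : Prop :=
  exists al be ga, 0 <= al /\ 0 <= be /\ 0 <= ga /\ al + be + ga = 1 /\
    x = add2 (scal2 al a) (add2 (scal2 be b) (scal2 ga c)).
Definition segm (i j : R2) (x : R2) : Prop :=
  exists t, 0 <= t <= 1 /\ x = add2 (scal2 (1 - t) i) (scal2 t j).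

Definition in_T (eps : R) (T : R2 -> Prop) : Prop :=
  exists a b c, in_lattice eps a /\ in_lattice eps b /\ in_lattice eps c /\
    dist2 a b = eps /\ dist2 b c = eps /\ dist2 a c = eps /\
    forall x, T x <-> conv3 a b c x.

Definition in_N (eps : R) (u : R2 -> R3) (E : R2 -> Prop) : Prop :=
  exists i j, in_lattice eps i /\ in_lattice eps j /\ dist2 i j = eps /\
    u i = opp3 (u j) /\ forall x, E x <-> segm i j x.

Definition neighbours (eps : R) (u : R2 -> R3) (T T' : R2 -> Prop) : Prop :=
  in_T eps T /\ in_T eps T' /\ in_N eps u (fun x => T x /\ T' x).

Definition connected_tri (eps : R) (u : R2 -> R3) (T T' : R2 -> Prop) : Prop :=
  clos_refl_trans (R2 -> Prop) (neighbours eps u) T T'.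

Definition union_conn (eps : R) (u : R2 -> R3) (Reg : R2 -> Prop) : Prop :=
  exists F : (R2 -> Prop) -> Prop,
    (forall T, F T -> in_T eps T) /\
    (forall T T', F T -> F T' -> connected_tri eps u T T') /\
    (forall x, Reg x <-> exists T, F T /\ T x).

Definition is_region (eps : R) (u : R2 -> R3) (Reg : R2 -> Prop) : Prop :=
  union_conn eps u Reg /\
  forall Reg', union_conn eps u Reg' -> (forall x, Reg x -> Reg' x) ->
    forall x, Reg' x -> Reg x.

Definition values (eps : R) (u : R2 -> R3) (Reg : R2 -> Prop) (w : R3) : Prop :=
  exists i, in_lattice eps i /\ Reg i /\ u i = w.

Fixpoint lincomb (l : list (R * R3)) : R3 :=
  match l with
  | nil => zero3
  | (a, w) :: l' => add3 (scal3 a w) (lincomb l')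
  end.
Fixpoint coefsum (l : list (R * R3)) : R :=
  match l with
  | nil => 0
  | (a, _) :: l' => a + coefsum l'
  end.
Definition nonneg_on (W : R3 -> Prop) (l : list (R * R3)) : Prop :=
  Forall (fun p => 0 <= fst p /\ W (snd p)) l.

Definition cone (W : R3 -> Prop) (v : R3) : Prop :=
  exists l, nonneg_on W l /\ v = lincomb l.

Definition lin_subspace (C : R3 -> Prop) : Prop :=
  C zero3 /\ (forall v w, C v -> C w -> C (add3 v w)) /\
  (forall a v, C v -> C (scal3 a v)).

(* S is an admissible interpolation surface for u in Reg.
   Only nonzero v are normalised (v/|v| is meaningless for v = 0). *)
Definition admissible_surface (eps : R) (u : R2 -> R3) (Reg : R2 -> Prop)
    (S : R3 -> Prop) : Prop :=
  let W := values eps u Reg in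
  (~ lin_subspace (cone W) /\
    forall q, S q <-> exists l, nonneg_on W l /\ 0 < coefsum l /\
                       lincomb l <> zero3 /\ q = normalize (lincomb l))
  \/
  (lin_subspace (cone W) /\
    exists h, on_S2 h /\ (forall v, cone W v -> dot3 h v = 0) /\
    forall q, S q <-> exists l tau, nonneg_on W l /\ 0 <= tau /\
                       0 < coefsum l + tau /\
                       add3 (lincomb l) (scal3 tau h) <> zero3 /\
                       q = normalize (add3 (lincomb l) (scal3 tau h))).

Definition lin_indep3 (p1 p2 p3 : R3) : Prop :=
  forall a b c, add3 (scal3 a p1) (add3 (scal3 b p2) (scal3 c p3)) = zero3 ->
    a = 0 /\ b = 0 /\ c = 0.

Definition semi_great_circle (S : R3 -> Prop) : Prop :=
  exists p q, on_S2 p /\ on_S2 q /\ dot3 p q = 0 /\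
    forall x, S x <-> exists t, 0 <= t <= PI /\
                 x = add3 (scal3 (cos t) p) (scal3 (sin t) q).

(* closed (minimal) arc of geodesic between p and q, q <> -p; p = q allowed
   (degenerate arc = a point) *)
Definition geodesic_arc (S : R3 -> Prop) : Prop :=
  exists p q, on_S2 p /\ on_S2 q /\ q <> opp3 p /\
    forall x, S x <-> exists a b, 0 <= a /\ 0 <= b /\ 0 < a + b /\
                 x = normalize (add3 (scal3 a p) (scal3 b q)).

Definition gtri (p1 p2 p3 : R3) (x : R3) : Prop :=
  exists a b c, 0 <= a /\ 0 <= b /\ 0 <= c /\ 0 < a + b + c /\
    x = normalize (add3 (scal3 a p1) (add3 (scal3 b p2) (scal3 c p3))).

Definition geodesic_triangle (S : R3 -> Prop) : Prop :=
  exists p1 p2 p3, on_S2 p1 /\ on_S2 p2 /\ on_S2 p3 /\ lin_indep3 p1 p2 p3 /\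
    forall x, S x <-> gtri p1 p2 p3 x.

Definition det3 (p q r : R3) : R :=
  c1 p * (c2 q * c3 r - c3 q * c2 r)
  - c2 p * (c1 q * c3 r - c3 q * c1 r)
  + c3 p * (c1 q * c2 r - c2 q * c1 r).

(* union of two geodesic triangles sharing the edge [p1,p2], lying on
   opposite sides of the great circle through p1, p2 *)
Definition two_adjacent_triangles (S : R3 -> Prop) : Prop :=
  exists p1 p2 p3 p4, on_S2 p1 /\ on_S2 p2 /\ on_S2 p3 /\ on_S2 p4 /\
    lin_indep3 p1 p2 p3 /\ lin_indep3 p1 p2 p4 /\
    det3 p1 p2 p3 * det3 p1 p2 p4 < 0 /\
    forall x, S x <-> gtri p1 p2 p3 x \/ gtri p1 p2 p4 x.

Definition hemisphere (S : R3 -> Prop) : Prop :=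
  exists h, on_S2 h /\
    ((forall x, S x <-> on_S2 x /\ 0 < dot3 x h) \/
     (forall x, S x <-> on_S2 x /\ 0 <= dot3 x h)).

(* Main.v *)
Require Import Defs.
From Stdlib Require Import Reals Lra Lia Psatz List Relations Classical FunctionalExtensionality PropExtensionality.
Import Defs.
Open Scope R_scope.

Definition cross3 (p q : R3) : R3 :=
  mk3 (c2 p * c3 q - c3 p * c2 q) (c3 p * c1 q - c1 p * c3 q) (c1 p * c2 q - c2 p * c1 q).

Definition lc2 a (p : R3) b q := add3 (scal3 a p) (scal3 b q).
Definition lc3 a (p : R3) b q c r := add3 (scal3 a p) (add3 (scal3 b q) (scal3 c r)).

Ltac vdestr := repeat match goal with v : R3 |- _ => destruct v as [[? ?] ?] end.
Ltac vunf := unfold lc2, lc3, normalize, norm3, opp3, cross3, det3, add3, scal3, zero3, dot3, mk3, c1, c2, c3 in *; simpl in *.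

Lemma eq3 : forall v w : R3, c1 v = c1 w -> c2 v = c2 w -> c3 v = c3 w -> v = w.
Proof. intros [[a b] c] [[d e] f]; unfold c1,c2,c3; simpl; intros; subst; reflexivity. Qed.

Lemma eq3_inv : forall v w : R3, v = w -> c1 v = c1 w /\ c2 v = c2 w /\ c3 v = c3 w.
Proof. intros; subst; auto. Qed.

Ltac veq := apply eq3; vdestr; vunf; ring.

Lemma dot_pos : forall v, v <> zero3 -> 0 < dot3 v v.
Proof.
  intros [[a b] c] H. vunf.
  destruct (Req_dec a 0); destruct (Req_dec b 0); destruct (Req_dec c 0); subst;
  try (exfalso; apply H; reflexivity); nra.
Qed.

Lemma dot_ge0 : forall v, 0 <= dot3 v v.
Proof. intros [[a b] c]; vunf; nra. Qed.

Lemma dot_zero : forall v, dot3 v v = 0 -> v = zero3.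
Proof. intros v H. destruct (classic (v = zero3)) as [|n]; auto. apply dot_pos in n; lra. Qed.

Lemma norm_pos : forall v, v <> zero3 -> 0 < norm3 v.
Proof. intros. unfold norm3. apply sqrt_lt_R0. now apply dot_pos. Qed.

Lemma norm_sq : forall v, norm3 v * norm3 v = dot3 v v.
Proof. intros; unfold norm3; apply sqrt_sqrt, dot_ge0. Qed.

Lemma onS2_dot : forall v, on_S2 v <-> dot3 v v = 1.
Proof.
  intros v; unfold on_S2, norm3; split; intros H.
  - rewrite <- (sqrt_sqrt (dot3 v v)) by apply dot_ge0. rewrite H; ring.
  - rewrite H; apply sqrt_1.
Qed.

Lemma onS2_nz : forall v, on_S2 v -> v <> zero3.
Proof. intros v H E; apply onS2_dot in H; subst; vunf; lra. Qed.

Lemma dot_scal_l : forall a v w, dot3 (scal3 a v) w = a * dot3 v w.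
Proof. intros; vdestr; vunf; ring. Qed.
Lemma dot_scal_r : forall a v w, dot3 v (scal3 a w) = a * dot3 v w.
Proof. intros; vdestr; vunf; ring. Qed.
Lemma dot_add_l : forall u v w, dot3 (add3 u v) w = dot3 u w + dot3 v w.
Proof. intros; vdestr; vunf; ring. Qed.
Lemma dot_add_r : forall u v w, dot3 w (add3 u v) = dot3 w u + dot3 w v.
Proof. intros; vdestr; vunf; ring. Qed.
Lemma dot_comm : forall v w, dot3 v w = dot3 w v.
Proof. intros; vdestr; vunf; ring. Qed.

Lemma normalize_unit : forall v, v <> zero3 -> on_S2 (normalize v).
Proof.
  intros v H. apply onS2_dot. unfold normalize.
  rewrite dot_scal_l, dot_scal_r. rewrite <- norm_sq.
  pose proof (norm_pos v H). field. lra.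
Qed.

Lemma normalize_id : forall v, on_S2 v -> normalize v = v.
Proof. intros v H. unfold normalize. rewrite H. rewrite Rinv_1. veq. Qed.

Lemma norm_scal : forall k v, 0 <= k -> norm3 (scal3 k v) = k * norm3 v.
Proof.
  intros k v Hk. unfold norm3. rewrite dot_scal_l, dot_scal_r.
  rewrite <- Rmult_assoc, sqrt_mult; try nra; try apply dot_ge0.
  rewrite sqrt_square; auto.
Qed.

Lemma normalize_scal : forall k v, 0 < k -> normalize (scal3 k v) = normalize v.
Proof.
  intros k v Hk. destruct (classic (v = zero3)) as [->|Hv].
  - unfold normalize. veq.
  - unfold normalize. rewrite norm_scal by lra. pose proof (norm_pos v Hv).
    apply eq3; vdestr; vunf; field; lra.
Qed.

Lemma dot_normalize : forall h v, dot3 h (normalize v) = dot3 h v / norm3 v.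
Proof. intros; unfold normalize; rewrite dot_scal_r; unfold Rdiv; ring. Qed.

Lemma normalize_nz : forall v, v <> zero3 -> normalize v <> zero3.
Proof. intros. apply onS2_nz, normalize_unit; auto. Qed.

Lemma opp_ne : forall h, on_S2 h -> h <> opp3 h.
Proof. intros [[a b] c] H E. apply onS2_dot in H. apply eq3_inv in E. vunf.
  destruct E as [E1 [E2 E3]]. assert (a = 0) by lra. assert (b = 0) by lra. assert (c = 0) by lra. subst. lra. Qed.

Lemma det_lc3_3 : forall p q r a b c, det3 p q (lc3 a p b q c r) = c * det3 p q r.
Proof. intros; unfold lc3; vdestr; vunf; ring. Qed.
Lemma det_lc3_1 : forall p q r a b c, det3 (lc3 a p b q c r) q r = a * det3 p q r.
Proof. intros; unfold lc3; vdestr; vunf; ring. Qed.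
Lemma det_lc3_2 : forall p q r a b c, det3 p (lc3 a p b q c r) r = b * det3 p q r.
Proof. intros; unfold lc3; vdestr; vunf; ring. Qed.

Lemma cramer : forall p q r v, det3 p q r <> 0 ->
  v = lc3 (det3 v q r / det3 p q r) p (det3 p v r / det3 p q r) q (det3 p q v / det3 p q r) r.
Proof. intros p q r v H. unfold lc3. apply eq3; vdestr; vunf; field; vunf; auto. Qed.

Lemma decomp3 : forall p q r v, det3 p q r <> 0 -> exists a b c, v = lc3 a p b q c r.
Proof. intros. do 3 eexists. apply cramer; auto. Qed.

Lemma indep3 : forall p q r a b c, det3 p q r <> 0 -> lc3 a p b q c r = zero3 -> a = 0 /\ b = 0 /\ c = 0.
Proof.
  intros p q r a b c H E.
  pose proof (det_lc3_1 p q r a b c) as E1. pose proof (det_lc3_2 p q r a b c) as E2.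
  pose proof (det_lc3_3 p q r a b c) as E3. rewrite E in E1, E2, E3.
  assert (Z1 : det3 zero3 q r = 0) by (vdestr; vunf; ring).
  assert (Z2 : det3 p zero3 r = 0) by (vdestr; vunf; ring).
  assert (Z3 : det3 p q zero3 = 0) by (vdestr; vunf; ring).
  rewrite Z1 in E1; rewrite Z2 in E2; rewrite Z3 in E3.
  repeat split; apply (Rmult_eq_reg_r (det3 p q r)); auto; lra.
Qed.

Lemma dot_cross : forall p q v, dot3 (cross3 p q) v = det3 p q v.
Proof. intros; vdestr; vunf; ring. Qed.

Lemma det_cross_pos : forall p q, cross3 p q <> zero3 -> 0 < det3 p q (cross3 p q).
Proof. intros. rewrite <- dot_cross. apply dot_pos; auto. Qed.

Lemma det_cross_nz : forall p q, cross3 p q <> zero3 -> det3 p q (cross3 p q) <> 0.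
Proof. intros. pose proof (det_cross_pos p q H); lra. Qed.

Lemma cross_par : forall p w, cross3 p w = zero3 -> scal3 (dot3 p p) w = scal3 (dot3 p w) p.
Proof.
  intros p w H.
  assert (E : scal3 (dot3 p p) w = add3 (scal3 (dot3 p w) p) (cross3 (cross3 p w) p)) by veq.
  rewrite E, H. veq.
Qed.

Lemma indep2 : forall p q a b, cross3 p q <> zero3 -> lc2 a p b q = zero3 -> a = 0 /\ b = 0.
Proof.
  intros p q a b H E.
  assert (E' : lc3 a p b q 0 (cross3 p q) = zero3).
  { unfold lc3; unfold lc2 in E; rewrite <- E; veq. }
  apply indep3 in E'; [tauto|]. apply det_cross_nz; auto.
Qed.

Lemma det_cyc : forall p q r, det3 p q r = det3 q r p.
Proof. intros; vdestr; vunf; ring. Qed.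
Lemma det_swap12 : forall p q r, det3 p q r = - det3 q p r.
Proof. intros; vdestr; vunf; ring. Qed.
Lemma det_swap23 : forall p q r, det3 p q r = - det3 p r q.
Proof. intros; vdestr; vunf; ring. Qed.
Lemma det_opp3 : forall p q r, det3 p q (opp3 r) = - det3 p q r.
Proof. intros; vdestr; vunf; ring. Qed.

Definition coneL (L : list R3) := cone (fun w => In w L).

Lemma nonneg_ext : forall (W W' : R3 -> Prop) l, (forall w, W w -> W' w) -> nonneg_on W l -> nonneg_on W' l.
Proof.
  intros W W' l H N. unfold nonneg_on in *. induction N; constructor; auto.
  destruct H0; split; auto.
Qed.

Lemma cone_ext : forall (W W' : R3 -> Prop), (forall w, W w <-> W' w) -> forall v, cone W v <-> cone W' v.
Proof.
  intros W W' H v; split; intros [l [N E]]; exists l; split; auto.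
  - eapply nonneg_ext; [|exact N]. intros; apply H; auto.
  - eapply nonneg_ext; [|exact N]. intros; apply H; auto.
Qed.

Lemma coneL_nil : forall v, coneL nil v <-> v = zero3.
Proof.
  intros v; split.
  - intros [l [N E]]. destruct l as [|[a x] l]; simpl in *; auto.
    inversion N; subst. simpl in H1; tauto.
  - intros ->. exists nil; split; [constructor|reflexivity].
Qed.

Lemma coneL_cons : forall w L v, coneL (w :: L) v <-> exists a, 0 <= a /\ coneL L (add3 v (scal3 (- a) w)).
Proof.
  intros w L v; split.
  - intros [l [N E]]. subst v. induction l as [|[a x] l IH].
    + exists 0; split; [lra|]. exists nil; split; [constructor|]. simpl. veq.
    + inversion N as [|? ? [Ha Hx] N']; subst. simpl in Hx, Ha.
      destruct (IH N') as [b [Hb [l' [N'' E']]]].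
      destruct Hx as [<-|Hx].
      * exists (a + b); split; [lra|]. exists l'; split; auto. rewrite <- E'. simpl.
        remember (lincomb l) as m. veq.
      * exists b; split; auto. exists ((a,x)::l'); split.
        -- constructor; auto.
        -- simpl. rewrite <- E'. remember (lincomb l) as m. veq.
  - intros [a [Ha [l [N E]]]]. exists ((a,w)::l); split.
    + constructor. split; simpl; auto. apply (nonneg_ext (fun w0 => In w0 L) (fun w0 => In w0 (w::L))); [|exact N]. simpl; auto.
    + simpl. rewrite <- E. veq.
Qed.

Definition GoodS (C S : R3 -> Prop) : Prop :=
  (~ lin_subspace C /\ forall q, S q <-> exists v, C v /\ v <> zero3 /\ q = normalize v)
  \/
  (lin_subspace C /\ exists h, on_S2 h /\ (forall v, C v -> dot3 h v = 0) /\
    forall q, S q <-> exists v tau, C v /\ 0 <= tau /\ add3 v (scal3 tau h) <> zero3 /\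
                      q = normalize (add3 v (scal3 tau h))).

Lemma coefsum_ge0 : forall W l, nonneg_on W l -> 0 <= coefsum l.
Proof. intros W l N; induction N as [|[a x] l [Ha _] N IH]; simpl in *; lra. Qed.

Lemma coefsum_0 : forall W l, nonneg_on W l -> coefsum l = 0 -> lincomb l = zero3.
Proof.
  intros W l N; induction N as [|[a x] l [Ha _] N IH]; simpl in *; intros E; auto.
  pose proof (coefsum_ge0 _ _ N). assert (a = 0) by lra. subst.
  rewrite IH by lra. veq.
Qed.

Lemma adm_good : forall eps u Reg S, admissible_surface eps u Reg S ->
  GoodS (cone (values eps u Reg)) S.
Proof.
  intros eps u Reg S HA. unfold admissible_surface in HA; cbv zeta in HA. unfold GoodS.
  destruct HA as [[Hn H]|[Hs [h [Hh [Ho H]]]]].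
  - left; split; auto. intros q0; rewrite H; split.
    + intros [l [N [Hc [Hnz ->]]]]. exists (lincomb l); repeat split; auto. exists l; auto.
    + intros [v [[l [N ->]] [Hnz ->]]]. exists l; repeat split; auto.
      pose proof (coefsum_ge0 _ _ N). destruct (Req_dec (coefsum l) 0) as [E|E]; [|lra].
      exfalso; apply Hnz; eapply coefsum_0; eauto.
  - right; split; auto. exists h; split; [auto|split; [exact Ho|]]. intros q0; rewrite H; split.
    + intros [l [tau [N [Ht [Hc [Hnz ->]]]]]]. exists (lincomb l), tau; repeat split; auto. exists l; auto.
    + intros [v [tau [[l [N ->]] [Ht [Hnz ->]]]]]. exists l, tau; repeat split; auto.
      pose proof (coefsum_ge0 _ _ N). destruct (Req_dec (coefsum l + tau) 0) as [E|E]; [|lra].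
      exfalso; apply Hnz. rewrite (coefsum_0 _ _ N) by lra. assert (tau = 0) by lra. subst. veq.
Qed.

Lemma subspace_ext : forall C C', (forall v, C v <-> C' v) -> lin_subspace C -> lin_subspace C'.
Proof.
  intros C C' H [H0 [Ha Hs]]. split; [|split].
  - apply H; auto.
  - intros v w Hv Hw; apply H; apply Ha; apply H; auto.
  - intros a v Hv; apply H; apply Hs; apply H; auto.
Qed.

Lemma GoodS_ext : forall C C' S, (forall v, C v <-> C' v) -> GoodS C S -> GoodS C' S.
Proof.
  intros C C' S H [[Hn HS]|[Hs [h [Hh [Ho HS]]]]].
  - left; split.
    + intros Hs; apply Hn; eapply subspace_ext; [|eauto]. intros; symmetry; auto.
    + intros q0; rewrite HS. split; intros [v [A B]]; exists v; split; auto; apply H; auto.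
  - right; split; [eapply subspace_ext; eauto|]. exists h; split; [auto|split].
    + intros v Hv; apply Ho, H; auto.
    + intros q0; rewrite HS. split; intros [v [tau [A B]]]; exists v, tau; split; auto; apply H; auto.
Qed.
Definition TZero (v : R3) := v = zero3.
Definition TRay q (v : R3) := exists a, 0 <= a /\ v = scal3 a q.
Definition TSector q1 q2 (v : R3) := exists a b, 0 <= a /\ 0 <= b /\ v = lc2 a q1 b q2.
Definition TSimp q1 q2 q3 (v : R3) := exists a b c, 0 <= a /\ 0 <= b /\ 0 <= c /\ v = lc3 a q1 b q2 c q3.
Definition TPlane p q (v : R3) := exists a b, v = lc2 a p b q.
Definition TLine p (v : R3) := exists c, v = scal3 c p.
Definition THalfPl p q (v : R3) := exists c b, 0 <= b /\ v = lc2 c p b q.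
Definition TWedge p q1 q2 (v : R3) := exists c a b, 0 <= a /\ 0 <= b /\ v = lc3 c p a q1 b q2.
Definition THalfSp n (v : R3) := 0 <= dot3 n v.
Definition TAll (v : R3) := True.

Definition Shapes (S : R3 -> Prop) := semi_great_circle S \/ geodesic_arc S \/ geodesic_triangle S \/
  two_adjacent_triangles S \/ hemisphere S.

Lemma notsub : forall (C : R3 -> Prop) v, C v -> ~ C (scal3 (-1) v) -> ~ lin_subspace C.
Proof. intros C v H1 H2 [_ [_ Hs]]. apply H2, Hs, H1. Qed.

Lemma dot_lc2 : forall a p b q, dot3 (lc2 a p b q) (lc2 a p b q) =
  a * a * dot3 p p + 2 * a * b * dot3 p q + b * b * dot3 q q.
Proof. intros; unfold lc2; vdestr; vunf; ring. Qed.

Lemma semicircle_of : forall p h (S : R3 -> Prop), on_S2 p -> on_S2 h -> dot3 p h = 0 ->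
  (forall x, S x <-> exists c tau, 0 <= tau /\ lc2 c p tau h <> zero3 /\ x = normalize (lc2 c p tau h)) ->
  semi_great_circle S.
Proof.
  intros p h S Hp Hh Hph HS. exists p, h. split; [auto|split; [auto|split; [auto|]]].
  pose proof Hp as Hp'. pose proof Hh as Hh'.
  apply onS2_dot in Hp', Hh'.
  intros x; rewrite HS; split.
  - intros [c [tau [Ht [Hnz ->]]]].
    assert (HN : norm3 (lc2 c p tau h) = sqrt (c * c + tau * tau)).
    { unfold norm3. rewrite dot_lc2, Hp', Hh', Hph. f_equal; ring. }
    pose proof (norm_pos _ Hnz) as Np. rewrite HN in Np.
    set (N := sqrt (c * c + tau * tau)) in *.
    assert (NN : N * N = c * c + tau * tau) by (apply sqrt_sqrt; nra).
    set (y := c / N).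
    assert (Hy : -1 <= y <= 1).
    { unfold y. split.
      - apply (Rmult_le_reg_r N); auto. unfold Rdiv. rewrite Rmult_assoc, Rinv_l by lra. nra.
      - apply (Rmult_le_reg_r N); auto. unfold Rdiv. rewrite Rmult_assoc, Rinv_l by lra. nra. }
    exists (acos y). split; [apply acos_bound|].
    rewrite cos_acos, sin_acos by auto.
    assert (E : sqrt (1 - y²) = tau / N).
    { assert (1 - y² = (tau / N) * (tau / N)) as ->.
      { unfold y, Rsqr. apply (Rmult_eq_reg_r (N * N)); [|nra].
        field_simplify; try lra. }
      apply sqrt_square. apply Rmult_le_pos; auto. left; apply Rinv_0_lt_compat; auto. }
    rewrite E. unfold normalize. rewrite HN. fold N. unfold lc2, y. apply eq3; vdestr; vunf; field; lra.
  - intros [t [Ht ->]]. exists (cos t), (sin t). split; [apply sin_ge_0; lra|].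
    assert (U : on_S2 (lc2 (cos t) p (sin t) h)).
    { apply onS2_dot. rewrite dot_lc2, Hp', Hh', Hph. pose proof (sin2_cos2 t). unfold Rsqr in *. lra. }
    split; [apply onS2_nz; auto|]. rewrite normalize_id; auto.
Qed.

Lemma arc_point : forall q (S : R3 -> Prop), on_S2 q -> (forall x, S x <-> x = q) -> geodesic_arc S.
Proof.
  intros q S Hq HS. exists q, q. split; [auto|split; [auto|split; [apply opp_ne; auto|]]].
  intros x; rewrite HS; split.
  - intros ->. exists 1, 0. split; [lra|split; [lra|split; [lra|]]].
    rewrite <- (normalize_id q) at 1 by auto. f_equal. veq.
  - intros [a [b [Ha [Hb [Hab ->]]]]].
    assert (E : add3 (scal3 a q) (scal3 b q) = scal3 (a + b) q) by veq. rewrite E.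
    rewrite normalize_scal by lra. apply normalize_id; auto.
Qed.

Lemma sub_zero : lin_subspace TZero.
Proof. unfold TZero; split; [auto|split]; intros; subst; veq. Qed.

Lemma shapes_zero : forall S, GoodS TZero S -> Shapes S.
Proof.
  intros S [[Hn _]|[_ [h [Hh [_ HS]]]]]; [exfalso; apply Hn, sub_zero|].
  right; left. apply (arc_point h); auto. intros x; rewrite HS; split.
  - intros [v [tau [Hv [Ht [Hnz ->]]]]]. unfold TZero in Hv; subst v.
    assert (E : add3 zero3 (scal3 tau h) = scal3 tau h) by veq. rewrite E in *.
    destruct (Req_dec tau 0) as [->|Hne]. { exfalso; apply Hnz; veq. }
    rewrite normalize_scal by lra. apply normalize_id; auto.
  - intros ->. exists zero3, 1. split; [reflexivity|split; [lra|]].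
    assert (E : add3 zero3 (scal3 1 h) = h) by veq. rewrite E.
    split; [apply onS2_nz; auto|]. rewrite normalize_id; auto.
Qed.

Lemma shapes_ray : forall q S, on_S2 q -> GoodS (TRay q) S -> Shapes S.
Proof.
  intros q S Hq [[_ HS]|[Hs _]].
  - right; left. apply (arc_point q); auto. intros x; rewrite HS; split.
    + intros [v [[a [Ha ->]] [Hnz ->]]]. destruct (Req_dec a 0) as [->|Hne]. { exfalso; apply Hnz; veq. }
      rewrite normalize_scal by lra. apply normalize_id; auto.
    + intros ->. exists q. split; [exists 1; split; [lra|veq]|]. split; [apply onS2_nz; auto|].
      symmetry; apply normalize_id; auto.
  - exfalso. revert Hs. apply (notsub _ q). { exists 1; split; [lra|veq]. }
    intros [a [Ha E]]. apply onS2_dot in Hq. apply (f_equal (dot3 q)) in E.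
    rewrite !dot_scal_r in E. nra.
Qed.
Lemma cross_opp_self : forall q, cross3 q (opp3 q) = zero3.
Proof. intros; veq. Qed.

Lemma lc2_nz : forall p q a b, cross3 p q <> zero3 -> 0 <= a -> 0 <= b -> 0 < a + b -> lc2 a p b q <> zero3.
Proof. intros p q a b H Ha Hb Hab E. apply indep2 in E; auto. lra. Qed.

Lemma lc2_pos : forall p q a b, cross3 p q <> zero3 -> 0 <= a -> 0 <= b -> lc2 a p b q <> zero3 -> 0 < a + b.
Proof.
  intros p q a b H Ha Hb E. destruct (Req_dec (a + b) 0); [|lra].
  exfalso; apply E. assert (a = 0) by lra. assert (b = 0) by lra. subst. veq.
Qed.

Lemma shapes_sector : forall q1 q2 S, on_S2 q1 -> on_S2 q2 -> cross3 q1 q2 <> zero3 ->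
  GoodS (TSector q1 q2) S -> Shapes S.
Proof.
  intros q1 q2 S H1 H2 Hc [[_ HS]|[Hs _]].
  - right; left. exists q1, q2. split; [auto|split; [auto|split]].
    + intros E. apply Hc. rewrite E. apply cross_opp_self.
    + intros x; rewrite HS; split.
      * intros [v [[a [b [Ha [Hb ->]]]] [Hnz ->]]]. exists a, b. repeat split; auto.
        eapply lc2_pos; eauto.
      * intros [a [b [Ha [Hb [Hab ->]]]]]. exists (lc2 a q1 b q2). split; [exists a, b; auto|].
        split; [apply lc2_nz; auto|reflexivity].
  - exfalso. revert Hs. apply (notsub _ q1). { exists 1, 0. repeat split; try lra. unfold lc2; veq. }
    intros [a [b [Ha [Hb E]]]]. assert (E' : lc2 (1 + a) q1 b q2 = zero3).
    { unfold lc2 in *. apply eq3_inv in E. destruct E as [E1 [E2 E3]]. apply eq3; vdestr; vunf; lra. }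
    apply indep2 in E'; auto. lra.
Qed.

Lemma lc3_nz : forall p q r a b c, det3 p q r <> 0 -> 0 <= a -> 0 <= b -> 0 <= c -> 0 < a + b + c ->
  lc3 a p b q c r <> zero3.
Proof. intros p q r a b c H Ha Hb Hc Habc E. apply indep3 in E; auto. lra. Qed.

Lemma lc3_pos : forall p q r a b c, 0 <= a -> 0 <= b -> 0 <= c -> lc3 a p b q c r <> zero3 -> 0 < a + b + c.
Proof.
  intros p q r a b c Ha Hb Hc E. destruct (Req_dec (a + b + c) 0); [|lra].
  exfalso; apply E. assert (a = 0) by lra. assert (b = 0) by lra. assert (c = 0) by lra. subst. veq.
Qed.

Lemma indep_of_det : forall p q r, det3 p q r <> 0 -> lin_indep3 p q r.
Proof. intros p q r H a b c E. apply (indep3 p q r); auto. Qed.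

Lemma shapes_simp : forall q1 q2 q3 S, on_S2 q1 -> on_S2 q2 -> on_S2 q3 -> det3 q1 q2 q3 <> 0 ->
  GoodS (TSimp q1 q2 q3) S -> Shapes S.
Proof.
  intros q1 q2 q3 S H1 H2 H3 Hd [[_ HS]|[Hs _]].
  - right; right; left. exists q1, q2, q3. split; [auto|]. split; [auto|]. split; [auto|].
    split; [apply indep_of_det; auto|].
    intros x; rewrite HS; split.
    + intros [v [[a [b [c [Ha [Hb [Hc ->]]]]]] [Hnz ->]]]. exists a, b, c. repeat split; auto.
      eapply lc3_pos; eauto.
    + intros [a [b [c [Ha [Hb [Hc [Habc ->]]]]]]]. exists (lc3 a q1 b q2 c q3).
      split; [exists a, b, c; auto|]. split; [apply lc3_nz; auto|reflexivity].
  - exfalso. revert Hs. apply (notsub _ q1). { exists 1, 0, 0. repeat split; try lra. unfold lc3; veq. }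
    intros [a [b [c [Ha [Hb [Hc E]]]]]]. assert (E' : lc3 (1 + a) q1 b q2 c q3 = zero3).
    { unfold lc3 in *. apply eq3_inv in E. destruct E as [E1 [E2 E3]]. apply eq3; vdestr; vunf; lra. }
    apply indep3 in E'; auto. lra.
Qed.

Lemma sub_plane : forall p q, lin_subspace (TPlane p q).
Proof.
  intros p q. split; [|split].
  - exists 0, 0. unfold lc2; veq.
  - intros v w [a [b ->]] [c [d ->]]. exists (a + c), (b + d). unfold lc2; veq.
  - intros k v [a [b ->]]. exists (k * a), (k * b). unfold lc2; veq.
Qed.

Lemma sub_line : forall p, lin_subspace (TLine p).
Proof.
  intros p. split; [|split].
  - exists 0. veq.
  - intros v w [a ->] [c ->]. exists (a + c). veq.
  - intros k v [a ->]. exists (k * a). veq.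
Qed.

Lemma sub_all : lin_subspace TAll.
Proof. repeat split. Qed.

Lemma hemi_closed_of : forall h (S : R3 -> Prop), on_S2 h ->
  (forall x, S x <-> on_S2 x /\ 0 <= dot3 x h) -> Shapes S.
Proof. intros h S Hh HS. right; right; right; right. exists h; split; auto. Qed.

Lemma shapes_plane : forall p q S, cross3 p q <> zero3 -> GoodS (TPlane p q) S -> Shapes S.
Proof.
  intros p q S Hc [[Hn _]|[_ [h [Hh [Ho HS]]]]]; [exfalso; apply Hn, sub_plane|].
  apply (hemi_closed_of h); auto.
  pose proof Hh as Hh'. apply onS2_dot in Hh'.
  assert (Hp : dot3 h p = 0) by (apply Ho; exists 1, 0; unfold lc2; veq).
  assert (Hq : dot3 h q = 0) by (apply Ho; exists 0, 1; unfold lc2; veq).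
  set (r := cross3 p q).
  assert (Hd : det3 p q r <> 0) by (apply det_cross_nz; auto).
  assert (Hhr : dot3 h r <> 0).
  { intros E. destruct (decomp3 p q r h Hd) as [a [b [c Eh]]].
    assert (dot3 h h = 0); [|lra]. rewrite Eh at 2. unfold lc3. rewrite !dot_add_r, !dot_scal_r.
    rewrite Hp, Hq, E. ring. }
  intros x; rewrite HS; split.
  - intros [v [tau [Hv [Ht [Hnz ->]]]]]. split; [apply normalize_unit; auto|].
    rewrite dot_comm, dot_normalize. apply Rmult_le_pos; [|left; apply Rinv_0_lt_compat, norm_pos; auto].
    rewrite dot_add_r, dot_scal_r, Ho by auto. nra.
  - intros [Hx Hxh]. exists (add3 x (scal3 (- dot3 x h) h)), (dot3 x h).
    split; [|split; [auto|]].
    + destruct (decomp3 p q r (add3 x (scal3 (- dot3 x h) h)) Hd) as [a [b [c Ev]]].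
      assert (Hv0 : dot3 h (add3 x (scal3 (- dot3 x h) h)) = 0).
      { rewrite dot_add_r, dot_scal_r, Hh', dot_comm. ring. }
      rewrite Ev in Hv0. unfold lc3 in Hv0. rewrite !dot_add_r, !dot_scal_r, Hp, Hq in Hv0.
      assert (c = 0). { apply (Rmult_eq_reg_r (dot3 h r)); auto. lra. }
      subst c. exists a, b. rewrite Ev. unfold lc3, lc2; veq.
    + assert (E : add3 (add3 x (scal3 (- dot3 x h) h)) (scal3 (dot3 x h) h) = x) by veq.
      rewrite E. split; [apply onS2_nz; auto|]. rewrite normalize_id; auto.
Qed.

Lemma shapes_line : forall p S, on_S2 p -> GoodS (TLine p) S -> Shapes S.
Proof.
  intros p S Hp [[Hn _]|[_ [h [Hh [Ho HS]]]]]; [exfalso; apply Hn, sub_line|].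
  left. apply (semicircle_of p h); auto.
  - rewrite dot_comm. apply Ho. exists 1; veq.
  - intros x; rewrite HS; split.
    + intros [v [tau [[c ->] [Ht [Hnz ->]]]]]. exists c, tau. auto.
    + intros [c [tau [Ht [Hnz ->]]]]. exists (scal3 c p), tau. split; [exists c; auto|]. auto.
Qed.

Lemma shapes_all : forall S, GoodS TAll S -> Shapes S.
Proof.
  intros S [[Hn _]|[_ [h [Hh [Ho HS]]]]]; [exfalso; apply Hn, sub_all|].
  exfalso. specialize (Ho h I). apply onS2_dot in Hh. lra.
Qed.
Lemma scal_scal : forall a b v, scal3 a (scal3 b v) = scal3 (a * b) v.
Proof. intros; veq. Qed.

Lemma shapes_halfpl : forall p q S, on_S2 p -> cross3 p q <> zero3 -> GoodS (THalfPl p q) S -> Shapes S.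
Proof.
  intros p q S Hp Hc [[_ HS]|[Hs _]].
  - left. pose proof Hp as Hp'. apply onS2_dot in Hp'.
    set (k := dot3 p q).
    set (q' := add3 q (scal3 (- k) p)).
    assert (Hq' : q' <> zero3).
    { intros E. assert (E' : lc2 (- k) p 1 q = zero3) by (rewrite <- E; unfold q'; veq).
      apply indep2 in E'; auto. lra. }
    set (N := norm3 q'). assert (HN : 0 < N) by (apply norm_pos; auto).
    set (h := normalize q').
    assert (Hh : on_S2 h) by (apply normalize_unit; auto).
    assert (Hph : dot3 p h = 0).
    { unfold h. rewrite dot_normalize. unfold q'. rewrite dot_add_r, dot_scal_r, Hp'. fold k.
      unfold Rdiv; ring. }
    assert (NH : scal3 N h = q').
    { unfold h, normalize. rewrite scal_scal. fold N. rewrite Rinv_r by lra. veq. }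
    assert (ID : forall c b, lc2 c p b q = lc2 (c + b * k) p (b * N) h).
    { intros c b. unfold lc2 at 2. rewrite <- scal_scal, NH. unfold q'. veq. }
    apply (semicircle_of p h); auto.
    intros x; rewrite HS; split.
    + intros [v [[c [b [Hb ->]]] [Hnz ->]]]. exists (c + b * k), (b * N).
      rewrite <- ID. split; [nra|auto].
    + intros [c [tau [Ht [Hnz ->]]]]. exists (lc2 (c - tau / N * k) p (tau / N) q).
      assert (E : lc2 (c - tau / N * k) p (tau / N) q = lc2 c p tau h).
      { rewrite ID. f_equal; field; lra. }
      rewrite E. split; [|auto]. exists (c - tau / N * k), (tau / N). split; auto.
      apply Rmult_le_pos; auto. left; apply Rinv_0_lt_compat; auto.
  - exfalso. revert Hs. apply (notsub _ q). { exists 0, 1. split; [lra|]. veq. }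
    intros [c [b [Hb E]]]. assert (E' : lc2 c p (1 + b) q = zero3).
    { apply eq3_inv in E. destruct E as [E1 [E2 E3]]. apply eq3; vdestr; vunf; lra. }
    apply indep2 in E'; auto. lra.
Qed.

Lemma onS2_opp : forall p, on_S2 p -> on_S2 (opp3 p).
Proof. intros p H. apply onS2_dot in H; apply onS2_dot. rewrite <- H. vdestr; vunf; ring. Qed.

Lemma shapes_wedge : forall p q1 q2 S, on_S2 p -> on_S2 q1 -> on_S2 q2 -> det3 p q1 q2 <> 0 ->
  GoodS (TWedge p q1 q2) S -> Shapes S.
Proof.
  intros p q1 q2 S Hp H1 H2 Hd [[_ HS]|[Hs _]].
  - right; right; right; left.
    assert (D1 : det3 q1 q2 p = det3 p q1 q2) by (vdestr; vunf; ring).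
    assert (D2 : det3 q1 q2 (opp3 p) = - det3 p q1 q2) by (vdestr; vunf; ring).
    assert (D1' : det3 q1 q2 p <> 0) by (rewrite D1; auto).
    assert (D2' : det3 q1 q2 (opp3 p) <> 0) by (rewrite D2; lra).
    exists q1, q2, p, (opp3 p).
    split; [auto|split; [auto|split; [auto|split; [apply onS2_opp; auto|]]]].
    split; [apply indep_of_det; auto|split; [apply indep_of_det; auto|split]].
    { rewrite D1, D2. assert (0 < det3 p q1 q2 * det3 p q1 q2).
      { destruct (Rlt_or_le 0 (det3 p q1 q2)); [nra|]. assert (det3 p q1 q2 < 0) by lra. nra. }
      lra. }
    intros x; rewrite HS; split.
    + intros [v [[c [a [b [Ha [Hb ->]]]]] [Hnz ->]]].
      destruct (Rle_or_lt 0 c) as [Hc|Hc].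
      * left. exists a, b, c. assert (E : lc3 c p a q1 b q2 = lc3 a q1 b q2 c p) by veq.
        rewrite E in *. repeat split; auto. eapply lc3_pos; eauto.
      * right. exists a, b, (- c).
        assert (E : lc3 c p a q1 b q2 = lc3 a q1 b q2 (- c) (opp3 p)) by veq.
        rewrite E in *. assert (0 <= - c) by lra. repeat split; auto. eapply lc3_pos; eauto.
    + intros [[a [b [c [Ha [Hb [Hc [Habc ->]]]]]]]|[a [b [c [Ha [Hb [Hc [Habc ->]]]]]]]].
      * exists (lc3 a q1 b q2 c p). split; [exists c, a, b; split; [auto|split; [auto|veq]]|].
        split; [apply lc3_nz; auto|reflexivity].
      * exists (lc3 a q1 b q2 c (opp3 p)). split; [exists (- c), a, b; split; [auto|split; [auto|veq]]|].
        split; [apply lc3_nz; auto|reflexivity].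
  - exfalso. revert Hs. apply (notsub _ q1). { exists 0, 1, 0. split; [lra|split; [lra|veq]]. }
    intros [c [a [b [Ha [Hb E]]]]]. assert (E' : lc3 c p (1 + a) q1 b q2 = zero3).
    { apply eq3_inv in E. destruct E as [E1 [E2 E3]]. apply eq3; vdestr; vunf; lra. }
    apply indep3 in E'; auto. lra.
Qed.

Lemma shapes_halfsp : forall n S, n <> zero3 -> GoodS (THalfSp n) S -> Shapes S.
Proof.
  intros n S Hn [[_ HS]|[Hs _]].
  - pose proof (norm_pos n Hn) as Nn.
    apply (hemi_closed_of (normalize n)); [apply normalize_unit; auto|].
    intros x; rewrite HS; split.
    + intros [v [Hv [Hnz ->]]]. split; [apply normalize_unit; auto|].
      rewrite dot_normalize, dot_comm, dot_normalize. unfold THalfSp in Hv.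
      pose proof (norm_pos v Hnz).
      unfold Rdiv. apply Rmult_le_pos; [apply Rmult_le_pos|]; auto; left; apply Rinv_0_lt_compat; auto.
    + intros [Hx Hxh]. exists x. split; [|split; [apply onS2_nz; auto|symmetry; apply normalize_id; auto]].
      unfold THalfSp. rewrite dot_normalize in Hxh. rewrite dot_comm.
      apply (Rmult_le_reg_r (/ norm3 n)); [apply Rinv_0_lt_compat; auto|]. lra.
  - exfalso. revert Hs. apply (notsub _ n). { unfold THalfSp. apply dot_ge0. }
    unfold THalfSp. rewrite dot_scal_r. pose proof (dot_pos n Hn). lra.
Qed.
Definition NewC (C : R3 -> Prop) (w : R3) (v : R3) := exists a, 0 <= a /\ C (add3 v (scal3 (- a) w)).

Lemma sub_eq : forall v a w X, add3 v (scal3 (- a) w) = X -> v = add3 X (scal3 a w).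
Proof. intros; subst; veq. Qed.
Lemma sub_eq' : forall v a w X, v = add3 X (scal3 a w) -> add3 v (scal3 (- a) w) = X.
Proof. intros; subst; veq. Qed.

Definition AType (C : R3 -> Prop) : Prop :=
  (exists p, on_S2 p /\ forall v, C v <-> TLine p v) \/
  (exists p q, on_S2 p /\ on_S2 q /\ cross3 p q <> zero3 /\ forall v, C v <-> THalfPl p q v) \/
  (exists p q1 q2, on_S2 p /\ on_S2 q1 /\ on_S2 q2 /\ det3 p q1 q2 <> 0 /\ forall v, C v <-> TWedge p q1 q2 v) \/
  (exists n, n <> zero3 /\ forall v, C v <-> THalfSp n v) \/
  (exists p q, cross3 p q <> zero3 /\ forall v, C v <-> TPlane p q v) \/
  (forall v, C v <-> TAll v).

Lemma AType_shapes : forall C S, AType C -> GoodS C S -> Shapes S.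
Proof.
  intros C S [[p [Hp E]]|[[p [q [Hp [Hq [Hc E]]]]]|[[p [q1 [q2 [Hp [H1 [H2 [Hd E]]]]]]]|
     [[n [Hn E]]|[[p [q [Hc E]]]|E]]]]] G; apply (GoodS_ext _ _ _ E) in G.
  - apply (shapes_line p); auto.
  - apply (shapes_halfpl p q); auto.
  - apply (shapes_wedge p q1 q2); auto.
  - apply (shapes_halfsp n); auto.
  - apply (shapes_plane p q); auto.
  - apply shapes_all; auto.
Qed.

Lemma AType_ext : forall C C', (forall v, C v <-> C' v) -> AType C -> AType C'.
Proof.
  intros C C' H [[p [Hp E]]|[[p [q [Hp [Hq [Hc E]]]]]|[[p [q1 [q2 [Hp [H1 [H2 [Hd E]]]]]]]|
     [[n [Hn E]]|[[p [q [Hc E]]]|E]]]]].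
  - left; exists p; split; auto; intros v; rewrite <- H; auto.
  - right; left; exists p, q; split; [auto|split; [auto|split; [auto|]]]; intros v; rewrite <- H; auto.
  - right; right; left; exists p, q1, q2; split; [auto|split; [auto|split; [auto|split; [auto|]]]];
    intros v; rewrite <- H; auto.
  - right; right; right; left; exists n; split; auto; intros v; rewrite <- H; auto.
  - right; right; right; right; left; exists p, q; split; auto; intros v; rewrite <- H; auto.
  - right; right; right; right; right; intros v; rewrite <- H; auto.
Qed.

Lemma plane_of_perp : forall p q v, cross3 p q <> zero3 -> dot3 (cross3 p q) v = 0 -> TPlane p q v.
Proof.
  intros p q v Hc Hv. pose proof (det_cross_nz p q Hc) as Hd.
  destruct (decomp3 p q (cross3 p q) v Hd) as [a [b [c E]]].
  rewrite E, dot_cross, det_lc3_3 in Hv.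
  assert (c = 0) by (apply (Rmult_eq_reg_r (det3 p q (cross3 p q))); auto; lra).
  subst c. exists a, b. rewrite E; veq.
Qed.

Lemma dot_cross_p : forall p q, dot3 (cross3 p q) p = 0.
Proof. intros; vdestr; vunf; ring. Qed.
Lemma dot_cross_q : forall p q, dot3 (cross3 p q) q = 0.
Proof. intros; vdestr; vunf; ring. Qed.

Lemma step_line : forall p w, on_S2 p -> on_S2 w -> AType (NewC (TLine p) w).
Proof.
  intros p w Hp Hw. destruct (classic (cross3 p w = zero3)) as [Hc|Hc].
  - left. exists p; split; auto. apply cross_par in Hc. apply onS2_dot in Hp. rewrite Hp in Hc.
    assert (Ew : w = scal3 (dot3 p w) p) by (rewrite <- Hc; veq).
    intros v; split.
    + intros [a [Ha [c E]]]. apply sub_eq in E. exists (c + a * dot3 p w). rewrite E, Ew at 1. veq.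
    + intros [c E]. exists 0; split; [lra|]. exists c. rewrite E; veq.
  - right; left. exists p, w. split; [auto|split; [auto|split; [auto|]]].
    intros v; split.
    + intros [a [Ha [c E]]]. apply sub_eq in E. exists c, a. split; auto; rewrite E; veq.
    + intros [c [b [Hb E]]]. exists b; split; auto. exists c. rewrite E; veq.
Qed.

Lemma step_halfpl : forall p q w, on_S2 p -> on_S2 q -> cross3 p q <> zero3 -> on_S2 w ->
  AType (NewC (THalfPl p q) w).
Proof.
  intros p q w Hp Hq Hc Hw. set (r := cross3 p q).
  pose proof (det_cross_nz p q Hc) as Hd. fold r in Hd.
  destruct (decomp3 p q r w Hd) as [al [be [ga Ew]]].
  destruct (Req_dec ga 0) as [Hg|Hg].
  - subst ga. assert (Ew' : w = lc2 al p be q) by (rewrite Ew; veq). clear Ew.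
    destruct (Rle_or_lt 0 be) as [Hb|Hb].
    + right; left. exists p, q. split; [auto|split; [auto|split; [auto|]]].
      intros v; split.
      * intros [a [Ha [c [b [Hb' E]]]]]. apply sub_eq in E. exists (c + a * al), (b + a * be).
        split; [nra|]. rewrite E, Ew'; veq.
      * intros H. exists 0; split; [lra|]. destruct H as [c [b [Hb' E]]]. exists c, b. split; auto; rewrite E; veq.
    + right; right; right; right; left. exists p, q. split; auto. intros v; split.
      * intros [a [Ha [c [b [Hb' E]]]]]. apply sub_eq in E. exists (c + a * al), (b + a * be).
        rewrite E, Ew'; veq.
      * intros [c [b E]]. set (a := Rabs b / (- be)).
        assert (Ha : 0 <= a) by (unfold a; apply Rmult_le_pos; [apply Rabs_pos|left; apply Rinv_0_lt_compat; lra]).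
        assert (Hab : a * be = - Rabs b) by (unfold a; field; lra).
        exists a; split; auto. exists (c - a * al), (b - a * be). split.
        -- rewrite Hab. pose proof (Rle_abs (- b)). rewrite Rabs_Ropp in H. lra.
        -- rewrite E, Ew'; veq.
  - right; right; left. exists p, q, w. split; [auto|split; [auto|split; [auto|split]]].
    + rewrite Ew, det_lc3_3. intros E. apply Rmult_integral in E. tauto.
    + intros v; split.
      * intros [a [Ha [c [b [Hb E]]]]]. apply sub_eq in E. exists c, b, a. split; auto; split; auto;
        rewrite E; veq.
      * intros [c [a [b [Ha [Hb E]]]]]. exists b; split; auto. exists c, a. split; auto; rewrite E; veq.
Qed.
Lemma NewC_ext : forall C C' w, (forall v, C v <-> C' v) -> forall v, NewC C w v <-> NewC C' w v.
Proof. intros C C' w H v; split; intros [a [Ha Hv]]; exists a; split; auto; apply H; auto. Qed.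

Lemma wedge_swap : forall p q1 q2 v, TWedge p q1 q2 v <-> TWedge p q2 q1 v.
Proof.
  intros p q1 q2 v; split; intros [c [a [b [Ha [Hb E]]]]]; exists c, b, a; split; auto; split; auto;
  rewrite E; veq.
Qed.

Lemma abs_trick : forall x k, k < 0 -> 0 <= Rabs x / (- k) /\ x - Rabs x / (- k) * k >= 0.
Proof.
  intros x k Hk. split.
  - apply Rmult_le_pos; [apply Rabs_pos|left; apply Rinv_0_lt_compat; lra].
  - assert (E : Rabs x / (- k) * k = - Rabs x) by (field; lra). rewrite E.
    pose proof (Rle_abs (- x)). rewrite Rabs_Ropp in H. lra.
Qed.

Lemma wedge_core : forall p q1 q2 w al be ga, on_S2 p -> on_S2 q1 -> on_S2 q2 -> on_S2 w ->
  det3 p q1 q2 <> 0 -> w = lc3 al p be q1 ga q2 -> ~ (be < 0 /\ 0 <= ga) ->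
  AType (NewC (TWedge p q1 q2) w).
Proof.
  intros p q1 q2 w al be ga Hp H1 H2 Hw Hd Ew Hn.
  destruct (Rle_or_lt 0 ga) as [Hg|Hg].
  -
    assert (Hb : 0 <= be) by (destruct (Rle_or_lt 0 be); auto; exfalso; apply Hn; auto).
    right; right; left. exists p, q1, q2. split; [auto|split; [auto|split; [auto|split; [auto|]]]].
    intros v; split.
    + intros [a [Ha [c [x [y [Hx [Hy E]]]]]]]. apply sub_eq in E.
      exists (c + a * al), (x + a * be), (y + a * ga). split; [nra|split; [nra|]]. rewrite E, Ew; veq.
    + intros H. exists 0; split; [lra|]. destruct H as [c [x [y [Hx [Hy E]]]]].
      exists c, x, y. split; auto; split; auto; rewrite E; veq.
  - destruct (Rtotal_order be 0) as [Hb|[Hb|Hb]].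
    +
      right; right; right; right; right. intros v; split; [intros; exact I|intros _].
      destruct (decomp3 p q1 q2 v Hd) as [c [x [y E]]].
      destruct (abs_trick x be Hb) as [A1 A2]. destruct (abs_trick y ga Hg) as [B1 B2].
      set (A := Rabs x / (- be)) in *. set (B := Rabs y / (- ga)) in *.
      exists (A + B). split; [lra|]. exists (c - (A + B) * al), (x - (A + B) * be), (y - (A + B) * ga).
      split; [nra|split; [nra|]]. rewrite E, Ew; veq.
    +
      subst be. right; right; right; left.
      set (d := det3 p q2 q1).
      assert (Hd' : d <> 0) by (unfold d; rewrite det_swap23; lra).
      assert (F : forall c x y, dot3 (scal3 d (cross3 p q2)) (lc3 c p x q1 y q2) = x * (d * d)).
      { intros c x y. rewrite dot_scal_l, dot_cross. unfold d. vdestr; vunf; ring. }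
      exists (scal3 d (cross3 p q2)). split.
      { intros E. specialize (F 0 1 0). rewrite E in F.
        assert (Z : dot3 zero3 (lc3 0 p 1 q1 0 q2) = 0) by (vdestr; vunf; ring).
        rewrite Z in F. assert (0 < d * d) by (destruct (Rlt_or_le 0 d); [nra|assert (d < 0) by lra; nra]).
        lra. }
      assert (Dp : 0 < d * d) by (destruct (Rlt_or_le 0 d); [nra|assert (d < 0) by lra; nra]).
      intros v; split.
      * intros [a [Ha [c [x [y [Hx [Hy E]]]]]]]. apply sub_eq in E. unfold THalfSp.
        assert (E' : v = lc3 (c + a * al) p x q1 (y + a * ga) q2) by (rewrite E, Ew; veq).
        rewrite E', F. nra.
      * unfold THalfSp. intros Hv. destruct (decomp3 p q1 q2 v Hd) as [c [x [y E]]].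
        rewrite E, F in Hv. assert (Hx : 0 <= x) by nra.
        destruct (abs_trick y ga Hg) as [B1 B2]. set (B := Rabs y / (- ga)) in *.
        exists B. split; auto. exists (c - B * al), x, (y - B * ga). split; auto; split; [lra|].
        rewrite E, Ew; veq.
    +
      right; right; left. exists p, w, q2. split; [auto|split; [auto|split; [auto|split]]].
      { rewrite Ew. pose proof (det_lc3_2 p q1 q2 al be ga) as D. rewrite D.
        intros Z. apply Rmult_integral in Z. destruct Z; [lra|auto]. }
      intros v; split.
      * intros [a [Ha [c [x [y [Hx [Hy E]]]]]]]. apply sub_eq in E.
        exists (c - x * al / be), (a + x / be), (y - x * ga / be).
        split; [|split].
        -- assert (0 <= x / be) by (apply Rmult_le_pos; [auto|left; apply Rinv_0_lt_compat; auto]). lra.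
        -- assert (0 <= x * (- ga) / be) by (apply Rmult_le_pos; [nra|left; apply Rinv_0_lt_compat; auto]).
           assert (x * ga / be = - (x * (-ga) / be)) by (field; lra). lra.
        -- rewrite E, Ew. apply eq3; vdestr; vunf; field; lra.
      * intros [c [x [y [Hx [Hy E]]]]]. exists x; split; auto. exists c, 0, y.
        split; [lra|split; auto]. rewrite E; veq.
Qed.
Lemma dot_zero_r : forall w, dot3 w zero3 = 0.
Proof. intros; vdestr; vunf; ring. Qed.

Lemma step_wedge : forall p q1 q2 w, on_S2 p -> on_S2 q1 -> on_S2 q2 -> on_S2 w ->
  det3 p q1 q2 <> 0 -> AType (NewC (TWedge p q1 q2) w).
Proof.
  intros p q1 q2 w Hp H1 H2 Hw Hd.
  destruct (decomp3 p q1 q2 w Hd) as [al [be [ga Ew]]].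
  destruct (classic (be < 0 /\ 0 <= ga)) as [[Hb Hg]|Hn].
  - apply (AType_ext (NewC (TWedge p q2 q1) w)).
    { intros v. apply NewC_ext. intros; rewrite wedge_swap; tauto. }
    apply (wedge_core p q2 q1 w al ga be); auto.
    + rewrite det_swap23; lra.
    + rewrite Ew; veq.
    + lra.
  - apply (wedge_core p q1 q2 w al be ga); auto.
Qed.

Lemma step_halfsp : forall n w, n <> zero3 -> AType (NewC (THalfSp n) w).
Proof.
  intros n w Hn. unfold THalfSp. destruct (Rle_or_lt 0 (dot3 n w)) as [H|H].
  - right; right; right; left. exists n; split; auto. intros v; split.
    + intros [a [Ha Hv]]. unfold THalfSp. rewrite dot_add_r, dot_scal_r in Hv. nra.
    + intros Hv. exists 0; split; [lra|]. rewrite dot_add_r, dot_scal_r. unfold THalfSp in Hv. lra.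
  - right; right; right; right; right. intros v; split; [intros; exact I|intros _].
    destruct (abs_trick (dot3 n v) (dot3 n w) H) as [A1 A2].
    exists (Rabs (dot3 n v) / - dot3 n w). split; auto. rewrite dot_add_r, dot_scal_r. lra.
Qed.

Lemma step_plane : forall p q w, cross3 p q <> zero3 -> AType (NewC (TPlane p q) w).
Proof.
  intros p q w Hc. set (r := cross3 p q).
  assert (P1 : forall v, TPlane p q v -> dot3 r v = 0).
  { intros v [a [b ->]]. unfold lc2, r. rewrite dot_add_r, !dot_scal_r, dot_cross_p, dot_cross_q. ring. }
  destruct (Req_dec (dot3 r w) 0) as [H|H].
  - right; right; right; right; left. exists p, q; split; auto. intros v; split.
    + intros [a [Ha Hv]]. apply plane_of_perp; auto. apply P1 in Hv.
      rewrite dot_add_r, dot_scal_r, H in Hv. fold r. lra.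
    + intros Hv. exists 0; split; [lra|]. destruct Hv as [a [b E]]. exists a, b. rewrite E; veq.
  - right; right; right; left. exists (scal3 (dot3 r w) r). split.
    { intros E. assert (Hz : dot3 w (scal3 (dot3 r w) r) = 0) by (rewrite E; apply dot_zero_r).
      rewrite dot_scal_r, (dot_comm w r) in Hz.
      apply Rmult_integral in Hz; destruct Hz; auto. }
    intros v; unfold THalfSp; rewrite dot_scal_l; split.
    + intros [a [Ha Hv]]. apply P1 in Hv. rewrite dot_add_r, dot_scal_r in Hv.
      assert (dot3 r v = a * dot3 r w) by lra. rewrite H0.
      assert (0 <= dot3 r w * dot3 r w) by nra. nra.
    + intros Hv. exists (dot3 r v / dot3 r w). split.
      * assert (E : dot3 r v / dot3 r w = dot3 r w * dot3 r v / (dot3 r w * dot3 r w)) by (field; auto).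
        rewrite E. apply Rmult_le_pos; auto. left; apply Rinv_0_lt_compat.
        destruct (Rlt_or_le 0 (dot3 r w)); [nra|assert (dot3 r w < 0) by lra; nra].
      * apply plane_of_perp; auto. fold r. rewrite dot_add_r, dot_scal_r. field; auto.
Qed.

Lemma step_all : forall w, AType (NewC TAll w).
Proof.
  intros w. right; right; right; right; right. intros v; split; [intros; exact I|].
  intros _. exists 0; split; [lra|exact I].
Qed.

Lemma step_A : forall C w, AType C -> on_S2 w -> AType (NewC C w).
Proof.
  intros C w HA Hw.
  destruct HA as [[p [Hp E]]|[[p [q [Hp [Hq [Hc E]]]]]|[[p [q1 [q2 [Hp [H1 [H2 [Hd E]]]]]]]|
     [[n [Hn E]]|[[p [q [Hc E]]]|E]]]]].
  - apply (AType_ext (NewC (TLine p) w)); [apply NewC_ext; intros; symmetry; apply E|apply step_line; auto].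
  - apply (AType_ext (NewC (THalfPl p q) w)); [apply NewC_ext; intros; symmetry; apply E|apply step_halfpl; auto].
  - apply (AType_ext (NewC (TWedge p q1 q2) w)); [apply NewC_ext; intros; symmetry; apply E|apply step_wedge; auto].
  - apply (AType_ext (NewC (THalfSp n) w)); [apply NewC_ext; intros; symmetry; apply E|apply step_halfsp; auto].
  - apply (AType_ext (NewC (TPlane p q) w)); [apply NewC_ext; intros; symmetry; apply E|apply step_plane; auto].
  - apply (AType_ext (NewC TAll w)); [apply NewC_ext; intros; symmetry; apply E|apply step_all].
Qed.

Lemma fold_A : forall L' L0, Forall on_S2 L' -> AType (coneL L0) -> AType (coneL (L' ++ L0)).
Proof.
  induction L' as [|w L' IH]; intros L0 HF HA; simpl; auto.
  inversion HF; subst.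
  apply (AType_ext (NewC (coneL (L' ++ L0)) w)).
  { intros v. rewrite coneL_cons. unfold NewC. tauto. }
  apply step_A; auto.
Qed.

Lemma base_A : forall p, on_S2 p -> AType (coneL (p :: opp3 p :: nil)).
Proof.
  intros p Hp. left. exists p; split; auto. intros v. rewrite coneL_cons. split.
  - intros [a [Ha H]]. rewrite coneL_cons in H. destruct H as [b [Hb H]]. rewrite coneL_nil in H.
    exists (a - b). apply eq3_inv in H. destruct H as [E1 [E2 E3]]. apply eq3; vdestr; vunf; lra.
  - intros [c ->]. destruct (Rle_or_lt 0 c) as [Hc|Hc].
    + exists c; split; auto. rewrite coneL_cons. exists 0; split; [lra|]. rewrite coneL_nil. veq.
    + exists 0; split; [lra|]. rewrite coneL_cons. exists (- c); split; [lra|]. rewrite coneL_nil. veq.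
Qed.

Lemma caseA : forall L p S, Forall on_S2 L -> In p L -> In (opp3 p) L -> on_S2 p ->
  GoodS (coneL L) S -> Shapes S.
Proof.
  intros L p S HF Hp Hm Hpu G.
  apply (AType_shapes (coneL (L ++ p :: opp3 p :: nil))).
  - apply fold_A; auto. apply base_A; auto.
  - eapply GoodS_ext; [|exact G]. intros v. apply cone_ext. intros w.
    rewrite in_app_iff. simpl. split; [tauto|]. intros [H|[<-|[<-|[]]]]; auto.
Qed.
Lemma par_unit : forall q w, on_S2 q -> on_S2 w -> cross3 q w = zero3 -> w = q \/ w = opp3 q.
Proof.
  intros q w Hq Hw Hc. apply cross_par in Hc.
  pose proof Hq as Hq'. apply onS2_dot in Hq'. rewrite Hq' in Hc.
  assert (Ew : w = scal3 (dot3 q w) q) by (rewrite <- Hc; veq).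
  assert (K : dot3 q w * dot3 q w = 1).
  { apply onS2_dot in Hw. rewrite Ew in Hw. rewrite dot_scal_l, dot_scal_r, Hq' in Hw. lra. }
  assert (dot3 q w = 1 \/ dot3 q w = -1) as [K1|K1].
  { assert ((dot3 q w - 1) * (dot3 q w + 1) = 0) by lra. apply Rmult_integral in H; destruct H; [left|right]; lra. }
  - left. rewrite Ew, K1. veq.
  - right. rewrite Ew, K1. reflexivity.
Qed.

Definition RS (P : R3 -> Prop) (C : R3 -> Prop) :=
  (exists q, P q /\ on_S2 q /\ forall v, C v <-> TRay q v) \/
  (exists q1 q2, P q1 /\ P q2 /\ on_S2 q1 /\ on_S2 q2 /\ cross3 q1 q2 <> zero3 /\ forall v, C v <-> TSector q1 q2 v).

Definition BType (C : R3 -> Prop) :=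
  RS (fun _ => True) C \/
  (exists q1 q2 q3, on_S2 q1 /\ on_S2 q2 /\ on_S2 q3 /\ det3 q1 q2 q3 <> 0 /\ forall v, C v <-> TSimp q1 q2 q3 v) \/
  (exists p q, cross3 p q <> zero3 /\ forall v, C v <-> TPlane p q v).

Lemma BType_shapes : forall C S, BType C -> GoodS C S -> Shapes S.
Proof.
  intros C S [[[q [_ [Hq E]]]|[q1 [q2 [_ [_ [H1 [H2 [Hc E]]]]]]]]|[[q1 [q2 [q3 [H1 [H2 [H3 [Hd E]]]]]]]|[p [q [Hc E]]]]] G;
  apply (GoodS_ext _ _ _ E) in G.
  - apply (shapes_ray q); auto.
  - apply (shapes_sector q1 q2); auto.
  - apply (shapes_simp q1 q2 q3); auto.
  - apply (shapes_plane p q); auto.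
Qed.

Lemma cross_scal_nz : forall k X, k <> 0 -> X <> zero3 -> scal3 k X <> zero3.
Proof.
  intros k X Hk HX E. apply HX. assert (X = scal3 (/ k) (scal3 k X)) as ->.
  { rewrite scal_scal, Rinv_l by auto. veq. }
  rewrite E. veq.
Qed.

Lemma step_ray : forall q w, on_S2 q -> on_S2 w -> w <> opp3 q -> RS (fun x => x = q \/ x = w) (NewC (TRay q) w).
Proof.
  intros q w Hq Hw Hn. destruct (classic (cross3 q w = zero3)) as [Hc|Hc].
  - destruct (par_unit q w Hq Hw Hc) as [->|]; [|contradiction].
    left. exists q; split; [auto|split; [auto|]]. intros v; split.
    + intros [a [Ha [b [Hb E]]]]. apply sub_eq in E. exists (b + a). split; [lra|]. rewrite E; veq.
    + intros H. exists 0; split; [lra|]. destruct H as [b [Hb E]]. exists b; split; auto; rewrite E; veq.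
  - right. exists q, w. split; [auto|split; [auto|split; [auto|split; [auto|split; [auto|]]]]]. intros v; split.
    + intros [a [Ha [b [Hb E]]]]. apply sub_eq in E. exists b, a. split; auto; split; auto; rewrite E; veq.
    + intros [x [y [Hx [Hy E]]]]. exists y; split; auto. exists x; split; auto; rewrite E; veq.
Qed.

Lemma unit_neg_multiple : forall q w k, on_S2 q -> on_S2 w -> k < 0 -> w = scal3 k q -> w = opp3 q.
Proof.
  intros q w k Hq Hw Hk E. apply onS2_dot in Hq. pose proof Hw as Hw'. apply onS2_dot in Hw'.
  rewrite E, dot_scal_l, dot_scal_r, Hq in Hw'.
  assert (k = -1). { assert ((k - 1) * (k + 1) = 0) by lra. apply Rmult_integral in H; destruct H; lra. }
  subst. reflexivity.
Qed.

Lemma step_sector : forall q1 q2 w, on_S2 q1 -> on_S2 q2 -> on_S2 w -> cross3 q1 q2 <> zero3 ->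
  w <> opp3 q1 -> w <> opp3 q2 -> BType (NewC (TSector q1 q2) w).
Proof.
  intros q1 q2 w H1 H2 Hw Hc N1 N2. set (r := cross3 q1 q2).
  pose proof (det_cross_nz q1 q2 Hc) as Hd. fold r in Hd.
  destruct (decomp3 q1 q2 r w Hd) as [al [be [ga Ew]]].
  destruct (Req_dec ga 0) as [Hg|Hg].
  - subst ga. assert (Ew' : w = lc2 al q1 be q2) by (rewrite Ew; veq). clear Ew.
    destruct (Rtotal_order al 0) as [Ha|[Ha|Ha]]; destruct (Rtotal_order be 0) as [Hb|[Hb|Hb]].
    +
      right; right. exists q1, q2. split; auto. intros v; split.
      * intros [a [Ha' [x [y [Hx [Hy E]]]]]]. apply sub_eq in E. exists (x + a * al), (y + a * be).
        rewrite E, Ew'; veq.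
      * intros [x [y E]]. destruct (abs_trick x al Ha) as [A1 A2]. destruct (abs_trick y be Hb) as [B1 B2].
        set (A := Rabs x / (- al)) in *. set (B := Rabs y / (- be)) in *.
        exists (A + B). split; [lra|]. exists (x - (A + B) * al), (y - (A + B) * be).
        split; [nra|split; [nra|]]. rewrite E, Ew'; veq.
    + exfalso. subst be. apply N1. apply (unit_neg_multiple q1 w al); auto. rewrite Ew'; veq.
    +
      left; right. exists q1, w. split; [auto|split; [auto|split; [auto|split; [auto|split]]]].
      { assert (E : cross3 q1 w = scal3 be (cross3 q1 q2)) by (rewrite Ew'; veq). rewrite E.
        apply cross_scal_nz; auto; lra. }
      intros v; split.
      * intros [a [Ha' [x [y [Hx [Hy E]]]]]]. apply sub_eq in E.
        exists (x - y * al / be), (a + y / be). split; [|split].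
        -- assert (0 <= y * (- al) / be) by (apply Rmult_le_pos; [nra|left; apply Rinv_0_lt_compat; auto]).
           assert (y * al / be = - (y * (- al) / be)) by (field; lra). lra.
        -- assert (0 <= y / be) by (apply Rmult_le_pos; [auto|left; apply Rinv_0_lt_compat; auto]). lra.
        -- rewrite E, Ew'. apply eq3; vdestr; vunf; field; lra.
      * intros [x [y [Hx [Hy E]]]]. exists y; split; auto. exists x, 0. split; [auto|split; [lra|]].
        rewrite E; veq.
    + exfalso. subst al. apply N2. apply (unit_neg_multiple q2 w be); auto. rewrite Ew'; veq.
    + exfalso. subst al be. apply onS2_nz in Hw. apply Hw. rewrite Ew'; veq.
    + left; right. exists q1, q2. split; [auto|split; [auto|split; [auto|split; [auto|split; [auto|]]]]].
      intros v; split.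
      * intros [a [Ha' [x [y [Hx [Hy E]]]]]]. apply sub_eq in E. exists (x + a * al), (y + a * be).
        split; [nra|split; [nra|]]. rewrite E, Ew'; veq.
      * intros H. exists 0; split; [lra|]. destruct H as [x [y [Hx [Hy E]]]]. exists x, y.
        split; auto; split; auto; rewrite E; veq.
    +
      left; right. exists w, q2. split; [auto|split; [auto|split; [auto|split; [auto|split]]]].
      { assert (E : cross3 w q2 = scal3 al (cross3 q1 q2)) by (rewrite Ew'; veq). rewrite E.
        apply cross_scal_nz; auto; lra. }
      intros v; split.
      * intros [a [Ha' [x [y [Hx [Hy E]]]]]]. apply sub_eq in E.
        exists (a + x / al), (y - x * be / al). split; [|split].
        -- assert (0 <= x / al) by (apply Rmult_le_pos; [auto|left; apply Rinv_0_lt_compat; auto]). lra.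
        -- assert (0 <= x * (- be) / al) by (apply Rmult_le_pos; [nra|left; apply Rinv_0_lt_compat; auto]).
           assert (x * be / al = - (x * (- be) / al)) by (field; lra). lra.
        -- rewrite E, Ew'. apply eq3; vdestr; vunf; field; lra.
      * intros [x [y [Hx [Hy E]]]]. exists x; split; auto. exists 0, y. split; [lra|split; [auto|]].
        rewrite E; veq.
    + left; right. exists q1, q2. split; [auto|split; [auto|split; [auto|split; [auto|split; [auto|]]]]].
      intros v; split.
      * intros [a [Ha' [x [y [Hx [Hy E]]]]]]. apply sub_eq in E. exists (x + a * al), (y + a * be).
        split; [nra|split; [nra|]]. rewrite E, Ew'; veq.
      * intros H. exists 0; split; [lra|]. destruct H as [x [y [Hx [Hy E]]]]. exists x, y.
        split; auto; split; auto; rewrite E; veq.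
    + left; right. exists q1, q2. split; [auto|split; [auto|split; [auto|split; [auto|split; [auto|]]]]].
      intros v; split.
      * intros [a [Ha' [x [y [Hx [Hy E]]]]]]. apply sub_eq in E. exists (x + a * al), (y + a * be).
        split; [nra|split; [nra|]]. rewrite E, Ew'; veq.
      * intros H. exists 0; split; [lra|]. destruct H as [x [y [Hx [Hy E]]]]. exists x, y.
        split; auto; split; auto; rewrite E; veq.
  - right; left. exists q1, q2, w. split; [auto|split; [auto|split; [auto|split]]].
    + rewrite Ew, det_lc3_3. intros E. apply Rmult_integral in E. tauto.
    + intros v; split.
      * intros [a [Ha [x [y [Hx [Hy E]]]]]]. apply sub_eq in E. exists x, y, a.
        split; auto; split; auto; split; auto; rewrite E; veq.
      * intros [x [y [z [Hx [Hy [Hz E]]]]]]. exists z; split; auto. exists x, y.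
        split; auto; split; auto; rewrite E; veq.
Qed.

Lemma caseB : forall a b c S, on_S2 a -> on_S2 b -> on_S2 c ->
  b <> opp3 c -> a <> opp3 b -> a <> opp3 c ->
  GoodS (coneL (a :: b :: c :: nil)) S -> Shapes S.
Proof.
  intros a b c S Ha Hb Hc Nbc Nab Nac G.
  assert (R1 : forall v, coneL (c :: nil) v <-> TRay c v).
  { intros v. rewrite coneL_cons. split.
    - intros [k [Hk H]]. rewrite coneL_nil in H. exists k; split; auto. apply sub_eq in H. rewrite H; veq.
    - intros [k [Hk E]]. exists k; split; auto. rewrite coneL_nil. rewrite E; veq. }
  assert (E1 : forall v, coneL (b :: c :: nil) v <-> NewC (TRay c) b v).
  { intros v. rewrite coneL_cons. unfold NewC. split; intros [k [Hk H]]; exists k; split; auto; apply R1; auto. }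
  assert (E : forall C, (forall v, coneL (b :: c :: nil) v <-> C v) ->
            forall v, coneL (a :: b :: c :: nil) v <-> NewC C a v).
  { intros C HC v. rewrite coneL_cons. unfold NewC. split; intros [k [Hk H]]; exists k; split; auto; apply HC; auto. }
  assert (Pa : forall q, q = c \/ q = b -> a <> opp3 q) by (intros q [->| ->]; auto).
  apply (BType_shapes (coneL (a :: b :: c :: nil))); auto.
  destruct (step_ray c b Hc Hb Nbc) as [[q [Pq [Hq E2]]]|[q1 [q2 [P1 [P2 [H1 [H2 [Hcr E2]]]]]]]].
  - assert (E2' : forall v, coneL (b :: c :: nil) v <-> TRay q v) by (intros v; rewrite E1; auto).
    destruct (step_ray q a Hq Ha (Pa q Pq)) as [[q' [_ [Hq' E']]]|[q1 [q2 [_ [_ [H1 [H2 [Hcr E']]]]]]]].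
    + left; left; exists q'; split; [auto|split; [auto|]]. intros v; rewrite (E _ E2'); auto.
    + left; right; exists q1, q2; split; [auto|split; [auto|split; [auto|split; [auto|split; [auto|]]]]].
      intros v; rewrite (E _ E2'); auto.
  - assert (E2' : forall v, coneL (b :: c :: nil) v <-> TSector q1 q2 v) by (intros v; rewrite E1; auto).
    pose proof (step_sector q1 q2 a H1 H2 Ha Hcr (Pa q1 P1) (Pa q2 P2)) as B.
    destruct B as [[[q [_ [Hq E']]]|[r1 [r2 [_ [_ [K1 [K2 [Kc E']]]]]]]]|[[r1 [r2 [r3 [K1 [K2 [K3 [Kd E']]]]]]]|[p [q [Kc E']]]]].
    + left; left; exists q; split; [auto|split; [auto|]]. intros v; rewrite (E _ E2'); auto.
    + left; right; exists r1, r2; split; [auto|split; [auto|split; [auto|split; [auto|split; [auto|]]]]].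
      intros v; rewrite (E _ E2'); auto.
    + right; left; exists r1, r2, r3; split; [auto|split; [auto|split; [auto|split; [auto|]]]].
      intros v; rewrite (E _ E2'); auto.
    + right; right; exists p, q; split; [auto|]. intros v; rewrite (E _ E2'); auto.
Qed.

Lemma alg3 : forall a b c S, on_S2 a -> on_S2 b -> on_S2 c ->
  GoodS (coneL (a :: b :: c :: nil)) S -> Shapes S.
Proof.
  intros a b c S Ha Hb Hc G.
  assert (HF : Forall on_S2 (a :: b :: c :: nil)) by (repeat constructor; auto).
  destruct (classic (b = opp3 c)) as [E|Nbc].
  { apply (caseA _ c S HF); simpl; auto. }
  destruct (classic (a = opp3 b)) as [E|Nab].
  { apply (caseA _ b S HF); simpl; auto. }
  destruct (classic (a = opp3 c)) as [E|Nac].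
  { apply (caseA _ c S HF); simpl; auto. }
  apply (caseB a b c); auto.
Qed.

Lemma alg0 : forall S, GoodS (coneL nil) S -> Shapes S.
Proof.
  intros S G. apply shapes_zero. eapply GoodS_ext; [|exact G]. intros v; rewrite coneL_nil; reflexivity.
Qed.
Definition sqd (p q : R2) : R := (fst p - fst q) ^ 2 + (snd p - snd q) ^ 2.

Lemma dist_sqd : forall p q e, 0 <= e -> dist2 p q = e -> sqd p q = e * e.
Proof.
  intros p q e He H. unfold dist2 in H. unfold sqd.
  rewrite <- H. rewrite sqrt_sqrt; auto. apply Rplus_le_le_0_compat; apply pow2_ge_0.
Qed.

Lemma comp_le_dist : forall p q, Rabs (fst p - fst q) <= dist2 p q /\ Rabs (snd p - snd q) <= dist2 p q.
Proof.
  intros p q. unfold dist2. split.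
  - rewrite <- sqrt_Rsqr_abs. apply sqrt_le_1_alt. unfold Rsqr.
    pose proof (pow2_ge_0 (snd p - snd q)). simpl in *. lra.
  - rewrite <- sqrt_Rsqr_abs. apply sqrt_le_1_alt. unfold Rsqr.
    pose proof (pow2_ge_0 (fst p - fst q)). simpl in *. lra.
Qed.

Lemma lat_coords : forall eps x, in_lattice eps x -> exists a b : Z,
  fst x = eps * (IZR a + IZR b / 2) /\ snd x = eps * (IZR b * sqrt 3 / 2).
Proof.
  intros eps x [a [b ->]]. exists a, b. unfold scal2, add2, e1, e2hat; simpl. split; field.
Qed.

Lemma Z_form : forall m n : Z, (m <> 0 \/ n <> 0)%Z -> (m * m + m * n + n * n >= 1)%Z.
Proof. intros m n H. nia. Qed.

Lemma lat_sep : forall eps x y, 0 < eps -> in_lattice eps x -> in_lattice eps y -> x <> y -> eps * eps <= sqd x y.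
Proof.
  intros eps x y He Hx Hy Hne.
  destruct (lat_coords eps x Hx) as [a1 [b1 [X1 X2]]].
  destruct (lat_coords eps y Hy) as [a2 [b2 [Y1 Y2]]].
  destruct (classic ((a1 - a2 = 0)%Z /\ (b1 - b2 = 0)%Z)) as [[Ea Eb]|Hn].
  - exfalso. apply Hne. assert (a1 = a2) by lia. assert (b1 = b2) by lia. subst.
    destruct x, y; simpl in *; subst; reflexivity.
  - assert (Hmn : (a1 - a2 <> 0 \/ b1 - b2 <> 0)%Z) by (apply not_and_or in Hn; auto).
    pose proof (Z_form _ _ Hmn) as Z. apply Z.ge_le in Z. apply IZR_le in Z.
    rewrite !plus_IZR, !mult_IZR, !minus_IZR in Z.
    assert (S3 : sqrt 3 * sqrt 3 = 3) by (apply sqrt_sqrt; lra).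
    unfold sqd. rewrite X1, X2, Y1, Y2.
    assert (E : (eps * (IZR a1 + IZR b1 / 2) - eps * (IZR a2 + IZR b2 / 2)) ^ 2 +
       (eps * (IZR b1 * sqrt 3 / 2) - eps * (IZR b2 * sqrt 3 / 2)) ^ 2 =
       eps * eps * (((IZR a1 - IZR a2) * (IZR a1 - IZR a2) + (IZR a1 - IZR a2) * (IZR b1 - IZR b2)
        + (IZR b1 - IZR b2) * (IZR b1 - IZR b2) / 4) + (IZR b1 - IZR b2) * (IZR b1 - IZR b2) * (sqrt 3 * sqrt 3) / 4))
       by field.
    rewrite E, S3.
    assert (0 < eps * eps) by nra.
    assert (E2 : forall m n, m * m + m * n + n * n / 4 + n * n * 3 / 4 = m * m + m * n + n * n) by (intros; field).
    rewrite E2. nra.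
Qed.

Definition combo3 al (a : R2) be b ga c := add2 (scal2 al a) (add2 (scal2 be b) (scal2 ga c)).

Lemma core_close : forall a b c al be ga e, 0 <= al -> 0 <= be -> 0 <= ga -> al + be + ga = 1 ->
  1 / 3 <= al -> 0 < e -> sqd a b = e * e -> sqd b c = e * e -> sqd a c = e * e ->
  sqd (combo3 al a be b ga c) a < e * e.
Proof.
  intros [a1 a2] [b1 b2] [c1 c2] al be ga e Ha Hb Hg Hs Hal He Hab Hbc Hac.
  unfold sqd, combo3, add2, scal2 in *; cbn [fst snd] in *.
  assert (al = 1 - be - ga) by lra. subst al.
  match goal with |- ?L < _ =>
    assert (E : L = be * be * ((a1 - b1) ^ 2 + (a2 - b2) ^ 2) + ga * ga * ((a1 - c1) ^ 2 + (a2 - c2) ^ 2)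
       + be * ga * (((a1 - b1) ^ 2 + (a2 - b2) ^ 2) + ((a1 - c1) ^ 2 + (a2 - c2) ^ 2) - ((b1 - c1) ^ 2 + (b2 - c2) ^ 2)))
    by ring end.
  rewrite E, Hab, Hbc, Hac.
  assert (K : be * be + be * ga + ga * ga < 1) by nra.
  assert (0 < e * e) by nra. nra.
Qed.

Lemma conv_vertex : forall eps a b c x, 0 < eps -> in_lattice eps a -> in_lattice eps b -> in_lattice eps c ->
  dist2 a b = eps -> dist2 b c = eps -> dist2 a c = eps -> in_lattice eps x -> conv3 a b c x ->
  x = a \/ x = b \/ x = c.
Proof.
  intros eps a b c x He La Lb Lc Dab Dbc Dac Lx [al [be [ga [Ha [Hb [Hg [Hs Ex]]]]]]].
  assert (Sab : sqd a b = eps * eps) by (apply dist_sqd; auto; lra).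
  assert (Sbc : sqd b c = eps * eps) by (apply dist_sqd; auto; lra).
  assert (Sac : sqd a c = eps * eps) by (apply dist_sqd; auto; lra).
  assert (Sym : forall p q, sqd p q = sqd q p) by (intros; unfold sqd; ring).
  assert (Fin : forall v, in_lattice eps v -> sqd x v < eps * eps -> x = v).
  { intros v Lv H. destruct (classic (x = v)); auto. pose proof (lat_sep eps x v He Lx Lv H0). lra. }
  destruct (Rle_or_lt (1/3) al) as [H1|H1].
  - left. apply Fin; auto. rewrite Ex. apply (core_close a b c al be ga eps); auto.
  - destruct (Rle_or_lt (1/3) be) as [H2|H2].
    + right; left. apply Fin; auto.
      assert (Ex' : x = combo3 be b al a ga c) by (rewrite Ex; unfold combo3, add2, scal2; simpl; f_equal; ring).
      rewrite Ex'. apply (core_close b a c be al ga eps); auto; try lra; rewrite Sym; auto.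
    + right; right. apply Fin; auto.
      assert (Ex' : x = combo3 ga c al a be b) by (rewrite Ex; unfold combo3, add2, scal2; simpl; f_equal; ring).
      rewrite Ex'. apply (core_close c a b ga al be eps); auto; try lra; rewrite Sym; auto.
Qed.
Lemma combo_bound : forall be ga x y e, 0 <= be -> 0 <= ga -> be + ga <= 1 -> Rabs x <= e -> Rabs y <= e ->
  Rabs (be * x + ga * y) <= e.
Proof.
  intros be ga x y e Hb Hg Hs Hx Hy.
  eapply Rle_trans; [apply Rabs_triang|]. rewrite !Rabs_mult, (Rabs_pos_eq be), (Rabs_pos_eq ga) by auto.
  assert (0 <= e) by (pose proof (Rabs_pos x); lra).
  assert (be * Rabs x <= be * e) by (apply Rmult_le_compat_l; auto).
  assert (ga * Rabs y <= ga * e) by (apply Rmult_le_compat_l; auto).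
  nra.
Qed.

Lemma tri_near : forall eps T x, in_T eps T -> T x -> exists a,
  Rabs (fst x - fst a) <= eps /\ Rabs (snd x - snd a) <= eps /\
  forall y, T y -> Rabs (fst y - fst a) <= eps /\ Rabs (snd y - snd a) <= eps.
Proof.
  intros eps T x [a [b [c [La [Lb [Lc [Dab [Dbc [Dac HT]]]]]]]]] Hx.
  assert (K : forall y, T y -> Rabs (fst y - fst a) <= eps /\ Rabs (snd y - snd a) <= eps).
  { intros y Hy. apply HT in Hy. destruct Hy as [al [be [ga [Ha [Hb [Hg [Hs Ey]]]]]]].
    destruct (comp_le_dist b a) as [B1 B2]. destruct (comp_le_dist c a) as [C1 C2].
    assert (dist2 b a = eps) by (rewrite <- Dab; unfold dist2; f_equal; ring).
    assert (dist2 c a = eps) by (rewrite <- Dac; unfold dist2; f_equal; ring).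
    subst y. unfold add2, scal2; cbn [fst snd]. split.
    - replace (al * fst a + (be * fst b + ga * fst c) - fst a) with (be * (fst b - fst a) + ga * (fst c - fst a))
        by (assert (al = 1 - be - ga) by lra; subst; ring).
      apply combo_bound; auto; lra.
    - replace (al * snd a + (be * snd b + ga * snd c) - snd a) with (be * (snd b - snd a) + ga * (snd c - snd a))
        by (assert (al = 1 - be - ga) by lra; subst; ring).
      apply combo_bound; auto; lra. }
  exists a. destruct (K x Hx). auto.
Qed.

Definition latpt eps (a b : Z) : R2 := scal2 eps (add2 (scal2 (IZR a) e1) (scal2 (IZR b) e2hat)).

Lemma lattice_box : forall eps x K, 0 < eps -> in_lattice eps x -> Rabs (fst x) <= K -> Rabs (snd x) <= K ->
  exists a b : Z, x = latpt eps a b /\ eps * Rabs (IZR a) <= 2 * K /\ eps * Rabs (IZR b) <= 2 * K.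
Proof.
  intros eps x K He [a [b Ex]] H1 H2. exists a, b. split; auto.
  assert (F1 : fst x = eps * (IZR a + IZR b / 2)) by (rewrite Ex; unfold scal2, add2, e1, e2hat; simpl; field).
  assert (F2 : snd x = eps * IZR b * (sqrt 3 / 2)) by (rewrite Ex; unfold scal2, add2, e1, e2hat; simpl; field).
  assert (S3 : 1 <= sqrt 3) by (rewrite <- sqrt_1; apply sqrt_le_1_alt; lra).
  assert (Bb : eps * Rabs (IZR b) <= 2 * K).
  { rewrite F2 in H2. rewrite !Rabs_mult, (Rabs_pos_eq eps), (Rabs_pos_eq (sqrt 3 / 2)) in H2 by (lra || (apply Rmult_le_pos; [apply sqrt_pos|lra])).
    assert (T0 : 0 <= eps * Rabs (IZR b)) by (apply Rmult_le_pos; [lra|apply Rabs_pos]).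
    assert (eps * Rabs (IZR b) * (1 / 2) <= eps * Rabs (IZR b) * (sqrt 3 / 2)) by (apply Rmult_le_compat_l; lra).
    lra. }
  split; auto.
  assert (E : eps * IZR a = fst x - eps * IZR b / 2) by (rewrite F1; field).
  assert (eps * Rabs (IZR a) = Rabs (fst x - eps * IZR b / 2)).
  { rewrite <- E, Rabs_mult, (Rabs_pos_eq eps) by lra. reflexivity. }
  rewrite H. eapply Rle_trans; [apply Rabs_triang|]. rewrite Rabs_Ropp.
  replace (eps * IZR b / 2) with ((eps * IZR b) * / 2) by field.
  rewrite Rabs_mult, (Rabs_mult eps), (Rabs_pos_eq eps), (Rabs_pos_eq (/ 2)) by lra. lra.
Qed.

Definition zrange (N : Z) : list Z := map (fun k => (Z.of_nat k - N)%Z) (seq 0 (Z.to_nat (2 * N))).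

Lemma in_zrange : forall N a, (- N < a < N)%Z -> In a (zrange N).
Proof.
  intros N a H. unfold zrange. apply in_map_iff. exists (Z.to_nat (a + N)). split.
  - rewrite Znat.Z2Nat.id by lia. lia.
  - apply in_seq. lia.
Qed.

Lemma Zbound : forall eps K (N : Z) r, 0 < eps -> 2 * K < eps * IZR N -> eps * Rabs r <= 2 * K ->
  forall z : Z, r = IZR z -> (- N < z < N)%Z.
Proof.
  intros eps K N r He HN Hr z ->.
  assert (Rabs (IZR z) < IZR N).
  { apply (Rmult_lt_reg_l eps); auto. lra. }
  apply Rabs_def2 in H. destruct H as [H1 H2]. split.
  - apply lt_IZR. rewrite opp_IZR. auto.
  - apply lt_IZR. auto.
Qed.

Lemma filter_ex : forall (P : R3 -> Prop) (L0 : list R3), exists L, forall w, (P w /\ In w L0) <-> In w L.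
Proof.
  intros P L0. induction L0 as [|x L0 [L IH]].
  - exists nil. simpl. tauto.
  - destruct (classic (P x)) as [H|H].
    + exists (x :: L). intros w. simpl. rewrite <- IH. split; [intros [Hw [<-|Hi]]; auto|].
      intros [<-|[Hw Hi]]; auto.
    + exists L. intros w. simpl. rewrite <- IH. split; [intros [Hw [<-|Hi]]; auto; contradiction|].
      intros [Hw Hi]; auto.
Qed.
Lemma abs3 : forall p q r e1 e2 M, Rabs (p - q) <= e1 -> Rabs (r - q) <= e2 -> Rabs r <= M -> Rabs p <= e1 + e2 + M.
Proof. intros. unfold Rabs in *. repeat destruct Rcase_abs; lra. Qed.

Lemma segm_left : forall i j, segm i j i.
Proof. intros [i1 i2] [j1 j2]. exists 0. split; [lra|]. unfold add2, scal2; simpl; f_equal; ring. Qed.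
Lemma segm_right : forall i j, segm i j j.
Proof. intros [i1 i2] [j1 j2]. exists 1. split; [lra|]. unfold add2, scal2; simpl; f_equal; ring. Qed.

Lemma npole_ne : npole <> opp3 npole.
Proof. intros E. apply eq3_inv in E. unfold npole in E; vunf. lra. Qed.

Theorem lemma5p6 (eps : R) (Omega : R2 -> Prop) (u : R2 -> R3)
  (Reg : R2 -> Prop) (S : R3 -> Prop) :
  0 < eps -> bounded2 Omega -> open2 Omega -> SF eps Omega u ->
  is_region eps u Reg -> admissible_surface eps u Reg S ->
  semi_great_circle S \/ geodesic_arc S \/ geodesic_triangle S \/
  two_adjacent_triangles S \/ hemisphere S.
Proof.
  intros He Hb _ [Hunit Hout] [[F [HF1 [HF2 HF3]]] _] Hadm.
  pose proof (adm_good _ _ _ _ Hadm) as G.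
  fold (Shapes S).
  set (W := values eps u Reg) in *.
  assert (GL : forall L, (forall w, W w <-> In w L) -> GoodS (coneL L) S).
  { intros L HL. eapply GoodS_ext; [|exact G]. intros v. apply cone_ext. exact HL. }
  destruct (classic (exists T1 T2, F T1 /\ F T2 /\ T1 <> T2)) as [[T1 [T2 [F1 [F2 Hne]]]]|Hall].
  -
    assert (Nb : forall T, F T -> exists T', neighbours eps u T T').
    { intros T FT.
      assert (Hc : exists T'', F T'' /\ T'' <> T).
      { destruct (classic (T = T1)) as [->|n]; [exists T2; auto|exists T1; auto]. }
      destruct Hc as [T'' [F'' Hn]]. pose proof (HF2 T T'' FT F'') as C.
      apply clos_rt_rt1n in C. inversion C; subst; [contradiction|]. eauto. }
    assert (Nedge : forall T T', neighbours eps u T T' -> exists i j, in_lattice eps i /\ in_lattice eps j /\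
               T i /\ T j /\ u i = opp3 (u j)).
    { intros T T' [_ [_ [i [j [Li [Lj [_ [Eu Hs]]]]]]]]. exists i, j. split; auto; split; auto.
      split; [apply Hs, segm_left|split; [apply Hs, segm_right|auto]]. }
    assert (OmPt : forall T, F T -> exists z, T z /\ Omega z).
    { intros T FT. destruct (Nb T FT) as [T' HN]. destruct (Nedge T T' HN) as [i [j [Li [Lj [Ti [Tj Eu]]]]]].
      destruct (classic (Omega i)); [exists i; auto|]. destruct (classic (Omega j)); [exists j; auto|].
      exfalso. rewrite (Hout i Li H), (Hout j Lj H0) in Eu. apply npole_ne; auto. }
    destruct Hb as [M HM].
    set (K := 2 * eps + M).
    assert (Bd : forall x, Reg x -> Rabs (fst x) <= K /\ Rabs (snd x) <= K).
    { intros x Rx. apply HF3 in Rx. destruct Rx as [T [FT Tx]].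
      destruct (OmPt T FT) as [z [Tz Oz]].
      destruct (tri_near eps T x (HF1 T FT) Tx) as [a [A1 [A2 Hall]]].
      destruct (Hall z Tz) as [Z1 Z2]. apply HM in Oz.
      destruct (comp_le_dist z (0, 0)) as [O1 O2]. simpl in O1, O2. rewrite Rminus_0_r in O1, O2.
      assert (X1 : Rabs (fst x) <= eps + eps + M) by (apply (abs3 _ (fst a) (fst z)); auto; lra).
      assert (X2 : Rabs (snd x) <= eps + eps + M) by (apply (abs3 _ (snd a) (snd z)); auto; lra).
      unfold K. split; lra. }
    destruct (archimed (2 * K / eps)) as [N1 _]. set (N := up (2 * K / eps)) in *.
    assert (HN : 2 * K < eps * IZR N).
    { apply (Rmult_lt_compat_l eps) in N1; auto. replace (eps * (2 * K / eps)) with (2 * K) in N1 by (field; lra). lra. }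
    set (L0 := flat_map (fun a => map (fun b => u (latpt eps a b)) (zrange N)) (zrange N)).
    assert (Hin : forall w, W w -> In w L0).
    { intros w [i [Li [Ri <-]]]. destruct (Bd i Ri) as [B1 B2].
      destruct (lattice_box eps i K He Li B1 B2) as [a [b [Ei [Ba Bb']]]].
      pose proof (Zbound eps K N _ He HN Ba a eq_refl) as Za.
      pose proof (Zbound eps K N _ He HN Bb' b eq_refl) as Zb.
      unfold L0. apply in_flat_map. exists a. split; [apply in_zrange; auto|].
      apply in_map_iff. exists b. split; [rewrite Ei; auto|apply in_zrange; auto]. }
    destruct (filter_ex W L0) as [L HL].
    assert (HWL : forall w, W w <-> In w L).
    { intros w. rewrite <- HL. split; [intros; split; auto|tauto]. }
    destruct (Nb T1 F1) as [T' HN'].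
    destruct (Nedge T1 T' HN') as [i [j [Li [Lj [Ti [Tj Eu]]]]]].
    assert (Ri : Reg i) by (apply HF3; exists T1; auto).
    assert (Rj : Reg j) by (apply HF3; exists T1; auto).
    apply (caseA L (u j) S).
    + apply Forall_forall. intros w Hw. apply HWL in Hw. destruct Hw as [k [Lk [_ <-]]]. auto.
    + apply HWL. exists j; auto.
    + apply HWL. exists i; auto.
    + auto.
    + apply GL; auto.
  - assert (Huniq : forall T T', F T -> F T' -> T = T').
    { intros T T' FT FT'. apply NNPP. intros n. apply Hall. exists T, T'; auto. }
    destruct (classic (exists T, F T)) as [[T0 F0]|Hno].
    + destruct (HF1 T0 F0) as [a [b [c [La [Lb [Lc [Dab [Dbc [Dac HT]]]]]]]]].
      assert (Va : Reg a).
      { apply HF3. exists T0. split; auto. apply HT. exists 1, 0, 0. repeat split; try lra.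
        destruct a, b, c; unfold add2, scal2; simpl; f_equal; ring. }
      assert (Vb : Reg b).
      { apply HF3. exists T0. split; auto. apply HT. exists 0, 1, 0. repeat split; try lra.
        destruct a, b, c; unfold add2, scal2; simpl; f_equal; ring. }
      assert (Vc : Reg c).
      { apply HF3. exists T0. split; auto. apply HT. exists 0, 0, 1. repeat split; try lra.
        destruct a, b, c; unfold add2, scal2; simpl; f_equal; ring. }
      apply (alg3 (u a) (u b) (u c)); auto.
      apply GL. intros w. split.
      * intros [i [Li [Ri <-]]]. apply HF3 in Ri. destruct Ri as [T [FT Ti]].
        rewrite (Huniq T T0 FT F0) in Ti. apply HT in Ti.
        destruct (conv_vertex eps a b c i He La Lb Lc Dab Dbc Dac Li Ti) as [->|[->| ->]]; simpl; auto.
      * simpl. intros [<-|[<-|[<-|[]]]]; [exists a|exists b|exists c]; auto.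
    + apply alg0. apply GL. intros w. split; [|simpl; tauto].
      intros [i [Li [Ri _]]]. apply HF3 in Ri. destruct Ri as [T [FT _]]. exfalso; apply Hno; eauto.
Qed.
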